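(* In the generic model, let $\mathcal P\colon H_R\to\mathbb R[x]$ be the map assigning to each $h\in H_R$ the polynomial with $\lim_{z\to0}\phi_{R,s}(h)=\mathcal P(h)\big(\ln\frac s\mu\big)$ for all $s>0$. Define $L\in\operatorname{End}(\mathbb R[x])$ by $$L(x^n)=-c_{-1}\frac{x^{n+1}}{n+1}+\sum_{i=1}^n\binom ni(-1)^{n-i}(n-i)!\,c_{n-i}\,x^i\qquad(n\ge0),$$ i.e. $L=-c_{-1}\int_0+\delta\eta$ with $\eta(x^n)=n!(-1)^nc_n$. Then $L$ is a Hochschild 1-cocycle of $\mathbb R[x]$ and $\mathcal P=\phi_L$, the unique unital algebra morphism $H_R\to\mathbb R[x]$ with $\phi_L\circ B_+=L\circ\phi_L$. Consequently $\mathcal P$ is a morphism of Hopf algebras.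
   Context: Generic model: $f\colon[0,\infty)\to\mathbb R$ continuous with $f(\zeta)-c/\zeta=O(\zeta^{-1-\epsilon})$ as $\zeta\to\infty$ for some $c\in\mathbb R,\epsilon>0$; Mellin transform $F(z)=\int_0^\infty f(\zeta)\zeta^{-z}d\zeta$ (holomorphic for $0<\operatorname{Re}z<1$, meromorphic near $0$ with Laurent expansion $F(z)=\sum_{n\ge-1}c_nz^n$). $H_R$: Connes–Kreimer Hopf algebra of rooted trees (basis rooted forests $w$, $|w|$ number of nodes, $w_v$ subtree rooted at node $v$, $B_+$ grafting onto a new root, coproduct with $\Delta\circ B_+=B_+\otimes\mathbb 1+(\mathrm{id}\otimes B_+)\circ\Delta$, antipode $S$). Regularized rules: algebra morphism $\phi_s(w)=s^{-z|w|}\prod_{v\in V(w)}F(z|w_v|)$; for fixed $\mu>0$, $\phi_{R,s}:=\phi_\mu^{\star-1}\star\phi_s$, i.e. $\phi_{R,s}(w)=\sum_w\phi_\mu(S(w_1))\phi_s(w_2)$. The limit $z\to0$ exists and is a polynomial in $\ln(s/\mu)$ (so $\mathcal P$ is well defined). $\mathbb R[x]$ carries the Hopf structure with $x$ primitive; $\int_0(x^n)=x^{n+1}/(n+1)$; for $\alpha\in\mathbb R[x]'$, $\delta\alpha=(\mathrm{id}\otimes\alpha)\circ\Delta-\mathbb 1\cdot\alpha$; a 1-cocycle is $L$ with $\Delta\circ L=(\mathrm{id}\otimes L)\circ\Delta+L\otimes\mathbb 1$. *)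

(* Defs.v *)
From Stdlib Require Export Reals List Arith.
Export ListNotations.
Open Scope R_scope.

Definition cont_on_nonneg (f : R -> R) : Prop :=
  forall x, 0 <= x -> forall e, 0 < e -> exists d, 0 < d /\
    forall y, 0 <= y -> Rabs (y - x) < d -> Rabs (f y - f x) < e.

Definition asymp_c_over (f : R -> R) (c eps : R) : Prop :=
  exists K M, 0 < M /\ forall zeta, M <= zeta ->
    Rabs (f zeta - c / zeta) <= K * Rpower zeta (- 1 - eps).

(* The improper Riemann integral  int_0^oo f(zeta) zeta^(-z) dzeta  converges to v *)
Definition mellin_at (f : R -> R) (z v : R) : Prop :=
  forall e, 0 < e -> exists d M, 0 < d /\ 0 < M /\
    forall a b, 0 < a < d -> M < b ->
      exists pr : Riemann_integrable (fun zeta => f zeta * Rpower zeta (- z)) a b,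
        Rabs (RiemannInt pr - v) < e.

Inductive tree : Type := Node : list tree -> tree.
(* B_+ (w) = Node w ;  a forest is a list of trees (a monomial of H_R) *)
Definition forest := list tree.

Fixpoint tsize (t : tree) : nat :=
  match t with
  | Node ch => S ((fix go (l : list tree) : nat :=
                     match l with nil => O | t' :: l' => (tsize t' + go l')%nat end) ch)
  end.
Definition fsize (w : forest) : nat := fold_right (fun t n => (tsize t + n)%nat) O w.

(* tensor products H_R (x) H_R: formal sums of pairs of forests (coefficients 1) *)
Definition cross (A B : list (forest * forest)) : list (forest * forest) :=
  flat_map (fun a => map (fun b => (fst a ++ fst b, snd a ++ snd b)) B) A.

(* coproduct: multiplicative, Delta (B_+ w) = B_+ w (x) 1 + (id (x) B_+) Delta w *)
Fixpoint tcoprod (t : tree) : list (forest * forest) :=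
  match t with
  | Node ch =>
      ([Node ch], nil) ::
      map (fun p => (fst p, [Node (snd p)]))
        ((fix go (l : list tree) : list (forest * forest) :=
            match l with
            | nil => [(nil, nil)]
            | t' :: l' => cross (tcoprod t') (go l')
            end) ch)
  end.
Definition fcoprod (w : forest) : list (forest * forest) :=
  fold_right (fun t acc => cross (tcoprod t) acc) [(nil, nil)] w.

(* elements of H_R: formal linear combinations of forests *)
Definition lc := list (R * forest).
Definition lc_mul (A B : lc) : lc :=
  flat_map (fun a => map (fun b => (fst a * fst b, snd a ++ snd b)) B) A.
Definition lc_eval (g : forest -> R) (A : lc) : R :=
  fold_right Rplus 0 (map (fun a => fst a * g (snd a)) A).

(* antipode: multiplicative, S(B_+ w) = - sum_{(w1,w2) in Delta w} S(w1) B_+(w2)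
   (fuel n >= size of the tree) *)
Fixpoint tantip (n : nat) (t : tree) : lc :=
  match n with
  | O => nil
  | S n' =>
      match t with
      | Node ch =>
          let fa := fun w : forest =>
                      fold_right (fun t' acc => lc_mul (tantip n' t') acc) [(1, nil)] w in
          flat_map (fun p => map (fun q => (- fst q, snd q ++ [Node (snd p)]))
                                 (fa (fst p)))
                   (fcoprod ch)
      end
  end.
Definition S_tree (t : tree) : lc := tantip (tsize t) t.
Definition S_forest (w : forest) : lc :=
  fold_right (fun t acc => lc_mul (S_tree t) acc) [(1, nil)] w.

Fixpoint tprodF (F : R -> R) (z : R) (t : tree) : R :=
  match t with
  | Node ch => F (z * INR (tsize (Node ch))) *
      (fix go (l : list tree) : R :=
         match l with nil => 1 | t' :: l' => tprodF F z t' * go l' end) ch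
  end.

Definition phi_s (F : R -> R) (z s : R) (w : forest) : R :=
  Rpower s (- (z * INR (fsize w))) * fold_right (fun t r => tprodF F z t * r) 1 w.

(* phi_{R,s}(w) = sum_{(w1,w2)} phi_mu(S w1) phi_s(w2) *)
Definition phi_R (F : R -> R) (mu z s : R) (w : forest) : R :=
  fold_right Rplus 0
    (map (fun p => lc_eval (phi_s F z mu) (S_forest (fst p)) * phi_s F z s (snd p))
         (fcoprod w)).

(* ---------- Polynomials R[x]: coefficient lists, lowest degree first ---------- *)

Definition poly := list R.
Definition peval (p : poly) (x : R) : R := fold_right (fun a acc => a + x * acc) 0 p.
Fixpoint padd (p q : poly) : poly :=
  match p, q with
  | nil, _ => q
  | _, nil => p
  | a :: p', b :: q' => (a + b) :: padd p' q'
  end.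
Definition pscale (a : R) (p : poly) : poly := map (Rmult a) p.
Fixpoint pmul (p q : poly) : poly :=
  match p with
  | nil => nil
  | a :: p' => padd (pscale a q) (0 :: pmul p' q)
  end.

Definition lsum (p : poly) (g : nat -> R) : R :=
  fold_right Rplus 0 (map (fun i => nth i p 0 * g i) (seq 0 (length p))).

(* L(x^n) = -c_{-1} x^{n+1}/(n+1) + sum_{i=1}^n binom(n,i) (-1)^{n-i} (n-i)! c_{n-i} x^i *)
Definition Lmono (cm1 : R) (c : nat -> R) (n : nat) : poly :=
  map (fun i => if Nat.eqb i 0 then 0
                else if Nat.eqb i (S n) then - cm1 / INR (S n)
                else C n i * (-1) ^ (n - i) * INR (fact (n - i)) * c (n - i)%nat)
      (seq 0 (n + 2)).
Definition Lpoly (cm1 : R) (c : nat -> R) (p : poly) : poly :=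
  fold_right padd nil (map (fun i => pscale (nth i p 0) (Lmono cm1 c i)) (seq 0 (length p))).

(* phi_L: unital algebra morphism with phi_L o B_+ = L o phi_L *)
Fixpoint phiL_t (cm1 : R) (c : nat -> R) (t : tree) : poly :=
  match t with
  | Node ch => Lpoly cm1 c
      ((fix go (l : list tree) : poly :=
          match l with nil => [1] | t' :: l' => pmul (phiL_t cm1 c t') (go l') end) ch)
  end.
Definition phiL (cm1 : R) (c : nat -> R) (w : forest) : poly :=
  fold_right (fun t acc => pmul (phiL_t cm1 c t) acc) [1] w.

(* Hochschild 1-cocycle condition  Delta o L = (id (x) L) o Delta + L (x) 1  on R[x],
   where R[x] (x) R[x] = R[x,y] is identified with polynomial functions of (a,b)
   and Delta p (a,b) = p(a+b). *)
Definition is_1cocycle (cm1 : R) (c : nat -> R) : Prop :=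
  forall (p : poly) (a b : R),
    peval (Lpoly cm1 c p) (a + b) =
      lsum p (fun n => sum_f_R0 (fun k => C n k * a ^ k * peval (Lmono cm1 c (n - k)) b) n)
      + peval (Lpoly cm1 c p) a.

Definition hopf_morphism (P : forest -> poly) : Prop :=
  (forall x, peval (P nil) x = 1) /\
  (forall w1 w2 x, peval (P (w1 ++ w2)) x = peval (P w1) x * peval (P w2) x) /\
  (forall w a b, peval (P w) (a + b) =
     fold_right Rplus 0 (map (fun p => peval (P (fst p)) a * peval (P (snd p)) b) (fcoprod w))) /\
  (forall w, peval (P w) 0 = match w with nil => 1 | _ => 0 end) /\
  (forall w a, lc_eval (fun u => peval (P u) a) (S_forest w) = peval (P w) (- a)).

(* Main.v *)
Require Import Defs.
From Stdlib Require Import Lra Lia.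
From Coquelicot Require Import Hierarchy Derive.

Fixpoint ssum (n : nat) (f : nat -> R) : R :=
  match n with O => 0 | S n => ssum n f + f n end.

Lemma ssum_ext n f g : (forall i, (i < n)%nat -> f i = g i) -> ssum n f = ssum n g.
Proof. induction n; simpl; intros; auto. rewrite IHn; [rewrite H|]; auto. Qed.

Lemma ssum_plus n f g : ssum n (fun i => f i + g i) = ssum n f + ssum n g.
Proof. induction n; simpl; [lra|]. rewrite IHn; lra. Qed.

Lemma ssum_scal n a f : ssum n (fun i => a * f i) = a * ssum n f.
Proof. induction n; simpl; [lra|]. rewrite IHn; lra. Qed.

Lemma ssum_zero n f : (forall i, (i < n)%nat -> f i = 0) -> ssum n f = 0.
Proof. induction n; simpl; intros; auto. rewrite IHn, H; auto; lra. Qed.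

Lemma ssum_shift n f : ssum (S n) f = f O + ssum n (fun i => f (S i)).
Proof. induction n; simpl in *; [lra|]. rewrite IHn; lra. Qed.

Lemma ssum_split n m f : ssum (n + m) f = ssum n f + ssum m (fun i => f (n + i)%nat).
Proof. induction m; simpl. rewrite Nat.add_0_r; lra.
  rewrite Nat.add_succ_r; simpl; rewrite IHm; lra. Qed.

Lemma ssum_exchange n m (f : nat -> nat -> R) :
  ssum n (fun i => ssum m (fun j => f i j)) = ssum m (fun j => ssum n (fun i => f i j)).
Proof. induction n; simpl. symmetry; apply ssum_zero; auto.
  rewrite IHn, <- ssum_plus; auto. Qed.

Lemma ssum_rev n f : ssum n f = ssum n (fun i => f (n - 1 - i)%nat).
Proof. induction n; auto. rewrite (ssum_shift n (fun i => f (S n - 1 - i)%nat)).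
  change (ssum (S n) f) with (ssum n f + f n).
  rewrite IHn. replace (S n - 1 - 0)%nat with n by lia.
  rewrite Rplus_comm. f_equal. apply ssum_ext; intros; f_equal; lia. Qed.

Lemma sum_f_R0_ssum f n : sum_f_R0 f n = ssum (S n) f.
Proof. induction n; simpl in *; [lra|]. rewrite IHn; auto. Qed.

Lemma ssum_le_extend n m f : (n <= m)%nat -> (forall i, (n <= i < m)%nat -> f i = 0) ->
  ssum m f = ssum n f.
Proof. intros. replace m with (n + (m - n))%nat by lia. rewrite ssum_split.
  rewrite (ssum_zero (m - n)); [lra|]. intros; apply H0; lia. Qed.

Lemma ssum_abs n f : Rabs (ssum n f) <= ssum n (fun i => Rabs (f i)).
Proof. induction n; simpl. rewrite Rabs_R0; lra.
  eapply Rle_trans; [apply Rabs_triang|]. lra. Qed.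

Lemma ssum_le n f g : (forall i, (i < n)%nat -> f i <= g i) -> ssum n f <= ssum n g.
Proof. induction n; simpl; intros; [lra|]. assert (f n <= g n) by (apply H; lia).
  assert (ssum n f <= ssum n g) by (apply IHn; intros; apply H; lia). lra. Qed.

Definition sumL {A} (f : A -> R) (l : list A) : R := fold_right Rplus 0 (map f l).

Lemma sumL_nil {A} (f : A -> R) : sumL f nil = 0. Proof. reflexivity. Qed.
Lemma sumL_cons {A} (f : A -> R) a l : sumL f (a :: l) = f a + sumL f l. Proof. reflexivity. Qed.

Lemma sumL_app {A} (f : A -> R) l1 l2 : sumL f (l1 ++ l2) = sumL f l1 + sumL f l2.
Proof. induction l1; simpl; [unfold sumL; simpl; lra|]. rewrite !sumL_cons, IHl1; lra. Qed.

Lemma sumL_ext {A} (f g : A -> R) l : (forall a, In a l -> f a = g a) -> sumL f l = sumL g l.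
Proof. induction l; intros; auto. rewrite !sumL_cons, H, IHl; simpl; auto. intros; apply H; simpl; auto. Qed.

Lemma sumL_plus {A} (f g : A -> R) l : sumL (fun a => f a + g a) l = sumL f l + sumL g l.
Proof. induction l; [unfold sumL; simpl; lra|]. rewrite !sumL_cons, IHl; lra. Qed.

Lemma sumL_scal {A} (f : A -> R) c l : sumL (fun a => c * f a) l = c * sumL f l.
Proof. induction l; [unfold sumL; simpl; lra|]. rewrite !sumL_cons, IHl; lra. Qed.

Lemma sumL_scal_r {A} (f : A -> R) c l : sumL (fun a => f a * c) l = sumL f l * c.
Proof. induction l; [unfold sumL; simpl; lra|]. rewrite !sumL_cons, IHl; lra. Qed.

Lemma sumL_opp {A} (f : A -> R) l : sumL (fun a => - f a) l = - sumL f l.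
Proof. induction l; [unfold sumL; simpl; lra|]. rewrite !sumL_cons, IHl; lra. Qed.

Lemma sumL_map {A B} (f : B -> R) (g : A -> B) l : sumL f (map g l) = sumL (fun a => f (g a)) l.
Proof. unfold sumL. rewrite map_map; auto. Qed.

Lemma sumL_flat_map {A B} (f : B -> R) (g : A -> list B) l :
  sumL f (flat_map g l) = sumL (fun a => sumL f (g a)) l.
Proof. induction l; auto. simpl. rewrite sumL_app, sumL_cons, IHl; auto. Qed.

Lemma sumL_ssum {A} (f : A -> nat -> R) n l :
  sumL (fun a => ssum n (f a)) l = ssum n (fun i => sumL (fun a => f a i) l).
Proof. induction l. unfold sumL; simpl; symmetry; apply ssum_zero; auto.
  rewrite sumL_cons, IHl. rewrite <- ssum_plus. apply ssum_ext; intros; rewrite sumL_cons; auto. Qed.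

Lemma sumL_swap {A B} (f : A -> B -> R) l1 l2 :
  sumL (fun a => sumL (fun b => f a b) l2) l1 = sumL (fun b => sumL (fun a => f a b) l1) l2.
Proof. induction l1. unfold sumL at 1; simpl. induction l2; auto. rewrite sumL_cons, <- IHl2; unfold sumL; simpl; lra.
  rewrite sumL_cons, IHl1, <- sumL_plus. apply sumL_ext; intros; rewrite sumL_cons; auto. Qed.

Lemma sumL_abs {A} (f : A -> R) l : Rabs (sumL f l) <= sumL (fun a => Rabs (f a)) l.
Proof. induction l. unfold sumL; simpl; rewrite Rabs_R0; lra.
  rewrite !sumL_cons. eapply Rle_trans; [apply Rabs_triang|]. lra. Qed.

Lemma sumL_le {A} (f g : A -> R) l : (forall a, In a l -> f a <= g a) -> sumL f l <= sumL g l.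
Proof. induction l; intros. unfold sumL; simpl; lra. rewrite !sumL_cons.
  assert (f a <= g a) by (apply H; simpl; auto). assert (sumL f l <= sumL g l) by (apply IHl; intros; apply H; simpl; auto). lra. Qed.

Lemma fold_seq_ssum (h : nat -> R) s n :
  fold_right Rplus 0 (map h (seq s n)) = ssum n (fun i => h (s + i)%nat).
Proof. revert s; induction n; intros; auto. cbn [seq map fold_right]. rewrite IHn, ssum_shift.
  rewrite Nat.add_0_r. f_equal. apply ssum_ext; intros; f_equal; lia. Qed.

Lemma sumL_seq (h : nat -> R) n : sumL h (seq 0 n) = ssum n h.
Proof. unfold sumL. rewrite fold_seq_ssum. auto. Qed.

Lemma peval_nil x : peval nil x = 0. Proof. reflexivity. Qed.
Lemma peval_cons a p x : peval (a :: p) x = a + x * peval p x. Proof. reflexivity. Qed.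

Lemma peval_padd p q x : peval (padd p q) x = peval p x + peval q x.
Proof. revert q; induction p; intros. simpl; lra. destruct q. simpl; lra.
  cbn [padd]. rewrite !peval_cons, IHp. lra. Qed.

Lemma peval_pscale a p x : peval (pscale a p) x = a * peval p x.
Proof. induction p. simpl; lra. unfold pscale in *; cbn [map].
  rewrite !peval_cons, IHp. lra. Qed.

Lemma peval_pmul p q x : peval (pmul p q) x = peval p x * peval q x.
Proof. induction p. simpl; lra. cbn [pmul].
  rewrite peval_padd, peval_pscale, peval_cons, IHp, peval_cons. lra. Qed.

Lemma nth_padd p q i : nth i (padd p q) 0 = nth i p 0 + nth i q 0.
Proof. revert q i; induction p; intros; simpl. destruct i; lra. destruct q; destruct i; simpl; try lra.
  apply IHp. Qed.

Lemma length_padd p q : length (padd p q) = Nat.max (length p) (length q).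
Proof. revert q; induction p; intros; simpl; auto. destruct q; simpl; auto. Qed.

Lemma length_pscale a p : length (pscale a p) = length p.
Proof. unfold pscale; apply length_map. Qed.

Lemma length_pmul p q : (length (pmul p q) <= length p + length q)%nat.
Proof. induction p; simpl; auto. lia. rewrite length_padd, length_pscale. simpl. lia. Qed.

Lemma peval_coef p x n : (length p <= n)%nat -> peval p x = ssum n (fun i => nth i p 0 * x ^ i).
Proof. revert n; induction p; intros.
  symmetry; apply ssum_zero; intros; destruct i; simpl; lra.
  destruct n; simpl in H; [lia|]. rewrite peval_cons, ssum_shift, (IHp n) by lia.
  simpl. rewrite <- ssum_scal. f_equal; [lra|]. apply ssum_ext; intros; simpl; lra. Qed.

Lemma nth_overflow0 (p : poly) i : (length p <= i)%nat -> nth i p 0 = 0.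
Proof. apply nth_overflow. Qed.

Lemma ssum_scal_r' n f c : ssum n (fun i => f i * c) = ssum n f * c.
Proof. induction n; simpl; [lra|]. rewrite IHn; lra. Qed.

Fixpoint pder (p : poly) : poly :=
  match p with nil => nil | a :: p' => padd p' (0 :: pder p') end.
Definition pdn (k : nat) (p : poly) : poly := Nat.iter k pder p.

Lemma pdn_S k p : pdn (S k) p = pder (pdn k p). Proof. reflexivity. Qed.

Lemma nth_pder p i : nth i (pder p) 0 = INR (S i) * nth (S i) p 0.
Proof. revert i; induction p; intros; simpl. destruct i; simpl; lra.
  rewrite nth_padd. destruct i; simpl. lra. rewrite IHp. rewrite S_INR. simpl. destruct i; simpl; lra. Qed.

Lemma length_pder p : (length (pder p) <= length p)%nat.
Proof. induction p; simpl; auto. rewrite length_padd; simpl; lia. Qed.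

Lemma length_pdn k p : (length (pdn k p) <= length p)%nat.
Proof. induction k; auto. rewrite pdn_S. eapply Nat.le_trans; [apply length_pder|]; auto. Qed.

Lemma INR_fact_neq0 n : INR (fact n) <> 0.
Proof. apply not_0_INR, fact_neq_0. Qed.

Lemma nth_pdn k p i : nth i (pdn k p) 0 = INR (fact (i + k)) / INR (fact i) * nth (i + k) p 0.
Proof. revert i; induction k; intros.
  simpl. rewrite Nat.add_0_r. field. apply INR_fact_neq0.
  rewrite pdn_S, nth_pder, IHk. replace (S i + k)%nat with (i + S k)%nat by lia.
  change (fact (S i)) with (S i * fact i)%nat. rewrite mult_INR.
  field. split. apply INR_fact_neq0. apply not_0_INR; lia. Qed.

Definition D (j i : nat) (x : R) : R :=
  if Nat.leb j i then INR (fact i) / INR (fact (i - j)) * x ^ (i - j) else 0.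

Lemma peval_pdn k p x : peval (pdn k p) x = ssum (length p) (fun i => nth i p 0 * D k i x).
Proof.
  rewrite (peval_coef _ _ (length p)) by apply length_pdn.
  rewrite <- (ssum_le_extend (length p) (k + length p) (fun i => nth i p 0 * D k i x))
    by (try lia; intros; rewrite nth_overflow0 by lia; lra).
  rewrite ssum_split. rewrite (ssum_zero k). 2:{ intros. unfold D. destruct (Nat.leb_spec k i); [lia|lra]. }
  rewrite Rplus_0_l. apply ssum_ext; intros. rewrite nth_pdn. unfold D.
  destruct (Nat.leb_spec k (k+i)); [|lia]. replace (k + i - k)%nat with i by lia.
  rewrite (Nat.add_comm i k). lra. Qed.

Lemma peval_at0 p : peval p 0 = nth 0 p 0.
Proof. destruct p; simpl; lra. Qed.

Lemma taylor_poly p t J : (length p <= S J)%nat ->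
  peval p t = ssum (S J) (fun j => t ^ j / INR (fact j) * peval (pdn j p) 0).
Proof. intros. rewrite (peval_coef _ _ (S J)) by auto. apply ssum_ext; intros.
  rewrite peval_at0, nth_pdn. rewrite Nat.add_0_l. simpl (fact 0). simpl (INR 1).
  field. apply INR_fact_neq0. Qed.

Fixpoint xmono (n : nat) : poly := match n with O => (1 :: nil) | S n => 0 :: xmono n end.

Lemma peval_xmono n x : peval (xmono n) x = x ^ n.
Proof. induction n; simpl in *; try lra. rewrite IHn; lra. Qed.
Lemma length_xmono n : length (xmono n) = S n.
Proof. induction n; simpl; auto. Qed.
Lemma nth_xmono n i : nth i (xmono n) 0 = if Nat.eqb i n then 1 else 0.
Proof. revert i; induction n; destruct i; simpl; auto. destruct i; auto. Qed.

Lemma peval_pdn_xmono j n x : peval (pdn j (xmono n)) x = D j n x.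
Proof. rewrite peval_pdn, length_xmono. simpl. rewrite (ssum_zero n).
  rewrite nth_xmono, Nat.eqb_refl. lra. intros. rewrite nth_xmono.
  destruct (Nat.eqb_spec i n); [lia|lra]. Qed.

Lemma is_derive_val (f : R -> R) x l l' : is_derive f x l -> l = l' -> is_derive f x l'.
Proof. intros; subst; auto. Qed.

Lemma is_derive_peval p x : is_derive (peval p) x (peval (pder p) x).
Proof. revert x; induction p; intros.
  apply (is_derive_ext (fun _ : R => 0)). intros; reflexivity. apply (is_derive_const (V:=R_NormedModule) 0).
  apply (is_derive_ext (fun x => a + x * peval p x)). intros; simpl; auto.
  eapply is_derive_val.
  apply (is_derive_plus (fun _ => a) (fun x => x * peval p x)). apply is_derive_const.
  apply (is_derive_mult (fun x => x) (peval p)). apply is_derive_id. apply IHp.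
  try (intros; apply Rmult_comm).
  simpl. rewrite peval_padd, peval_cons. unfold plus, mult, zero, one; simpl. lra. Qed.

Lemma is_derive_sumL {A} (g : A -> R -> R) (dg : A -> R) (L : list A) y :
  (forall q, In q L -> is_derive (g q) y (dg q)) ->
  is_derive (fun y => sumL (fun q => g q y) L) y (sumL dg L).
Proof. induction L; intros. apply (is_derive_ext (fun _ : R => 0)). intros; reflexivity. apply (is_derive_const (V:=R_NormedModule) 0).
  apply (is_derive_ext (fun y => g a y + sumL (fun q => g q y) L)). intros; rewrite sumL_cons; auto.
  rewrite sumL_cons. apply (is_derive_plus (g a)). apply H; simpl; auto.
  apply IHL. intros; apply H; simpl; auto. Qed.

Lemma deriv_transfer p a (L : list (R * poly)) :
  (forall y, peval p (a + y) = sumL (fun q => fst q * peval (snd q) y) L) ->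
  forall k y, peval (pdn k p) (a + y) = sumL (fun q => fst q * peval (pdn k (snd q)) y) L.
Proof. intros H k; induction k; intros y. simpl; apply H.
  assert (H1 : is_derive (fun y => peval (pdn k p) (a + y)) y (peval (pdn (S k) p) (a + y))).
  { eapply is_derive_val. apply (is_derive_comp (peval (pdn k p)) (fun y => a + y)).
    apply is_derive_peval. eapply is_derive_val.
    apply (is_derive_plus (fun _ => a) (fun y => y)). apply is_derive_const. apply is_derive_id.
    unfold plus, zero, one; simpl. reflexivity. unfold scal; simpl. unfold mult; simpl. lra. }
  assert (H2 : is_derive (fun y => sumL (fun q => fst q * peval (pdn k (snd q)) y) L) y
                  (sumL (fun q => fst q * peval (pdn (S k) (snd q)) y) L)).
  { apply is_derive_sumL. intros. apply is_derive_scal. apply is_derive_peval. }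
  apply is_derive_unique in H1. apply is_derive_unique in H2.
  rewrite <- H1, <- H2. apply Derive_ext. intros; apply IHk. Qed.

Lemma same_deriv (f g h : R -> R) :
  (forall x, is_derive f x (h x)) -> (forall x, is_derive g x (h x)) -> f 0 = g 0 ->
  forall x, f x = g x.
Proof. intros Hf Hg H0 x.
  assert (Hd : forall t, is_derive (fun t => f t - g t) t 0).
  { intros t. eapply is_derive_val. apply (is_derive_minus f g). apply Hf. apply Hg.
    unfold minus, plus, opp; simpl. lra. }
  destruct (Rtotal_order x 0) as [Hx|[Hx|Hx]].
  - assert (E := eq_is_derive (fun t => f t - g t) x 0 (fun t _ => Hd t) Hx). simpl in E. lra.
  - subst; auto.
  - assert (E := eq_is_derive (fun t => f t - g t) 0 x (fun t _ => Hd t) Hx). simpl in E. lra.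
Qed.

Definition lcp (L : list (R * poly)) (y : R) : R := sumL (fun q => fst q * peval (snd q) y) L.

Lemma pdn_lin p (L : list (R * poly)) :
  (forall y, peval p y = lcp L y) -> forall k y, peval (pdn k p) y = lcp (map (fun q => (fst q, pdn k (snd q))) L) y.
Proof. intros. unfold lcp. rewrite sumL_map. simpl.
  rewrite <- (Rplus_0_l y) at 1. apply deriv_transfer. intros; rewrite Rplus_0_l; apply H. Qed.

Definition coefL (cm1 : R) (c : nat -> R) (n i : nat) : R :=
  if Nat.eqb i 0 then 0
  else if Nat.eqb i (S n) then - cm1 / INR (S n)
  else Binomial.C n i * (-1) ^ (n - i) * INR (fact (n - i)) * c (n - i)%nat.

Lemma nth_map_seq (h : nat -> R) m i : (i < m)%nat -> nth i (map h (seq 0 m)) 0 = h i.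
Proof. intros. rewrite (nth_indep _ 0 (h 0%nat)) by (rewrite length_map, length_seq; auto).
  rewrite map_nth, seq_nth; auto. Qed.

Lemma length_Lmono cm1 c n : length (Lmono cm1 c n) = (n + 2)%nat.
Proof. unfold Lmono. rewrite length_map, length_seq; auto. Qed.

Lemma nth_Lmono cm1 c n i : nth i (Lmono cm1 c n) 0 = if Nat.ltb i (n+2) then coefL cm1 c n i else 0.
Proof. destruct (Nat.ltb_spec i (n+2)). unfold Lmono. rewrite nth_map_seq; auto.
  apply nth_overflow0. rewrite length_Lmono; lia. Qed.

Lemma Lmono_at0 cm1 c n : peval (Lmono cm1 c n) 0 = 0.
Proof. rewrite peval_at0, nth_Lmono. simpl. unfold coefL. simpl. destruct (n+2)%nat; auto. Qed.

Lemma fact_S_INR i : INR (fact (S i)) = INR (S i) * INR (fact i).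
Proof. change (fact (S i)) with (S i * fact i)%nat. apply mult_INR. Qed.

Lemma Lmono_deriv cm1 c n x :
  peval (pder (Lmono cm1 c n)) x = - cm1 * x ^ n + ssum n (fun m => (-1) ^ m * c m * D (S m) n x).
Proof.
  change (pder (Lmono cm1 c n)) with (pdn 1 (Lmono cm1 c n)). rewrite peval_pdn, length_Lmono.
  replace (n + 2)%nat with (S (S n)) by lia. rewrite ssum_shift.
  change (ssum (S n) (fun i => nth (S i) (Lmono cm1 c n) 0 * D 1 (S i) x))
    with (ssum n (fun i => nth (S i) (Lmono cm1 c n) 0 * D 1 (S i) x) + nth (S n) (Lmono cm1 c n) 0 * D 1 (S n) x).
  rewrite !nth_Lmono. destruct (Nat.ltb_spec 0 (n+2)); [|lia]. destruct (Nat.ltb_spec (S n) (n+2)); [|lia].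
  replace (coefL cm1 c n 0) with 0 by reflexivity.
  replace (coefL cm1 c n (S n)) with (- cm1 / INR (S n)) by (unfold coefL; simpl Nat.eqb; rewrite Nat.eqb_refl; auto).
  replace (D 1 (S n) x) with (INR (fact (S n)) / INR (fact n) * x ^ n)
    by (unfold D; simpl Nat.leb; replace (S n - 1)%nat with n by lia; auto).
  rewrite fact_S_INR.
  rewrite ssum_rev with (f := fun m => (-1) ^ m * c m * D (S m) n x).
  assert (E : ssum n (fun i => nth (S i) (Lmono cm1 c n) 0 * D 1 (S i) x) =
     ssum n (fun i => (-1) ^ (n - 1 - i) * c (n - 1 - i)%nat * D (S (n - 1 - i)) n x)).
  { apply ssum_ext; intros. rewrite nth_Lmono. destruct (Nat.ltb_spec (S i) (n+2)); [|lia].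
    unfold coefL. simpl Nat.eqb. destruct (Nat.eqb_spec i n); [lia|].
    unfold D. rewrite !(proj2 (Nat.leb_le _ _)) by lia.
    replace (S i - 1)%nat with i by lia. replace (n - S (n - 1 - i))%nat with i by lia.
    replace (n - S i)%nat with (n - 1 - i)%nat by lia.
    unfold Binomial.C. rewrite fact_S_INR. replace (n - S i)%nat with (n - 1 - i)%nat by lia.
    field. repeat split; try apply INR_fact_neq0; apply not_0_INR; lia. }
  rewrite E. field. split; [apply INR_fact_neq0|apply not_0_INR; lia]. Qed.

Lemma peval_fold_padd {A} (g : A -> poly) (l : list A) y :
  peval (fold_right padd nil (map g l)) y = sumL (fun i => peval (g i) y) l.
Proof. induction l; auto. simpl. rewrite peval_padd, IHl. rewrite sumL_cons; auto. Qed.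

Definition Lm cm1 c n x := peval (Lmono cm1 c n) x.

Lemma peval_Lpoly cm1 c q y :
  peval (Lpoly cm1 c q) y = lcp (map (fun i => (nth i q 0, Lmono cm1 c i)) (seq 0 (length q))) y.
Proof. unfold Lpoly, lcp. rewrite peval_fold_padd, sumL_map. apply sumL_ext; intros.
  rewrite peval_pscale; auto. Qed.

Lemma peval_Lpoly_ssum cm1 c q y :
  peval (Lpoly cm1 c q) y = ssum (length q) (fun i => nth i q 0 * Lm cm1 c i y).
Proof. rewrite peval_Lpoly. unfold lcp. rewrite sumL_map, sumL_seq. auto. Qed.

Lemma Lpoly_at0 cm1 c q : peval (Lpoly cm1 c q) 0 = 0.
Proof. rewrite peval_Lpoly_ssum. apply ssum_zero; intros. unfold Lm; rewrite Lmono_at0; lra. Qed.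

Lemma D_zero j i x : (i < j)%nat -> D j i x = 0.
Proof. intros; unfold D. destruct (Nat.leb_spec j i); [lia|auto]. Qed.

Lemma Lpoly_deriv cm1 c q M x : (length q <= M)%nat ->
  peval (pder (Lpoly cm1 c q)) x =
  - cm1 * peval q x + ssum M (fun m => (-1) ^ m * c m * peval (pdn (S m) q) x).
Proof. intros HM.
  change (pder (Lpoly cm1 c q)) with (pdn 1 (Lpoly cm1 c q)).
  rewrite (pdn_lin _ _ (peval_Lpoly cm1 c q) 1 x). unfold lcp. rewrite !sumL_map, sumL_seq. cbn [fst snd].
  rewrite (peval_coef q x (length q)) by auto.
  assert (E : forall m, peval (pdn (S m) q) x = ssum (length q) (fun i => nth i q 0 * D (S m) i x)).
  { intros; apply peval_pdn. }
  rewrite (ssum_ext M _ (fun m => ssum (length q) (fun i => (-1)^m * c m * (nth i q 0 * D (S m) i x)))).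
  2:{ intros. rewrite E, <- ssum_scal. auto. }
  rewrite ssum_exchange, <- ssum_scal, <- ssum_plus. apply ssum_ext; intros i Hi.
  change (pder (Lmono cm1 c i)) with (pdn 1 (Lmono cm1 c i)) in *.
  change (peval (Nat.iter 1 pder (Lmono cm1 c i)) x) with (peval (pder (Lmono cm1 c i)) x).
  rewrite Lmono_deriv.
  rewrite (ssum_le_extend i M) by (try lia; intros; rewrite D_zero by lia; lra).
  rewrite (ssum_ext i (fun j => (-1) ^ j * c j * (nth i q 0 * D (S j) i x)) (fun j => nth i q 0 * ((-1) ^ j * c j * D (S j) i x))) by (intros; lra).
  rewrite ssum_scal. lra. Qed.

Lemma is_derive_shift p a y : is_derive (fun y => peval p (a + y)) y (peval (pder p) (a + y)).
Proof. eapply is_derive_val. apply (is_derive_comp (peval p) (fun y => a + y)).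
    apply is_derive_peval. eapply is_derive_val.
    apply (is_derive_plus (fun _ => a) (fun y => y)). apply is_derive_const. apply is_derive_id.
    unfold plus, zero, one; simpl. reflexivity. unfold scal; simpl. unfold mult; simpl. lra. Qed.

Lemma is_derive_ssum (g : nat -> R -> R) (dg : nat -> R) n y :
  (forall i, (i < n)%nat -> is_derive (g i) y (dg i)) ->
  is_derive (fun y => ssum n (fun i => g i y)) y (ssum n dg).
Proof. induction n; intros. apply (is_derive_ext (fun _ : R => 0)). intros; reflexivity. apply (is_derive_const (V:=R_NormedModule) 0).
  apply (is_derive_ext (fun y => ssum n (fun i => g i y) + g n y)). intros; reflexivity.
  apply (is_derive_plus (fun y => ssum n (fun i => g i y)) (g n)). apply IHn; intros; apply H; lia. apply H; lia. Qed.

Lemma D_shift j n a b : D j n (a + b) = ssum (S n) (fun k => Binomial.C n k * a ^ k * D j (n - k) b).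
Proof.
  rewrite <- peval_pdn_xmono.
  rewrite (deriv_transfer (xmono n) a (map (fun k => (Binomial.C n k * a ^ k, xmono (n - k))) (seq 0 (S n)))).
  - rewrite sumL_map, sumL_seq. apply ssum_ext; intros. simpl. rewrite peval_pdn_xmono; auto.
  - intros y. rewrite peval_xmono, binomial, sum_f_R0_ssum, sumL_map, sumL_seq. apply ssum_ext; intros.
    simpl. rewrite peval_xmono; auto.
Qed.

Lemma Lm_shift cm1 c n a b :
  Lm cm1 c n (a + b) = Lm cm1 c n a + ssum (S n) (fun k => Binomial.C n k * a ^ k * Lm cm1 c (n - k) b).
Proof.
  apply (same_deriv (fun b => Lm cm1 c n (a + b))
     (fun b => Lm cm1 c n a + ssum (S n) (fun k => Binomial.C n k * a ^ k * Lm cm1 c (n - k) b))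
     (fun b => peval (pder (Lmono cm1 c n)) (a + b))).
  - intros; apply is_derive_shift.
  - intros x. eapply is_derive_val.
    apply (is_derive_plus (fun _ => Lm cm1 c n a) (fun b => ssum (S n) (fun k => Binomial.C n k * a ^ k * Lm cm1 c (n - k) b))).
    apply is_derive_const.
    apply (is_derive_ssum (fun k b => Binomial.C n k * a ^ k * Lm cm1 c (n - k) b)
       (fun k => Binomial.C n k * a ^ k * peval (pder (Lmono cm1 c (n - k))) x)).
    intros. apply is_derive_scal. apply is_derive_peval.
    change (plus (zero : R_NormedModule) ?v = ?w) with (0 + v = w). rewrite Rplus_0_l.
    symmetry. rewrite Lmono_deriv.
    rewrite (ssum_ext (S n) _ (fun k => - cm1 * (Binomial.C n k * a ^ k * x ^ (n - k)) +
       ssum n (fun m => (-1) ^ m * c m * (Binomial.C n k * a ^ k * D (S m) (n - k) x)))).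
    2:{ intros. rewrite Lmono_deriv. rewrite (ssum_le_extend (n - i) n).
        rewrite Rmult_plus_distr_l, <- ssum_scal. f_equal. lra. apply ssum_ext; intros; lra.
        lia. intros. rewrite D_zero by lia. lra. }
    rewrite ssum_plus, ssum_scal. rewrite ssum_exchange.
    rewrite binomial, sum_f_R0_ssum. f_equal. apply ssum_ext; intros.
    rewrite ssum_scal. rewrite D_shift. auto.
  - unfold Lm. rewrite !Rplus_0_r, ssum_zero. lra. intros. rewrite Lmono_at0; lra.
Qed.

Lemma cocycle_part cm1 c : is_1cocycle cm1 c.
Proof. unfold is_1cocycle. intros p a b. rewrite !peval_Lpoly_ssum. unfold lsum.
  rewrite fold_seq_ssum. simpl. rewrite <- ssum_plus. apply ssum_ext; intros.
  fold (Lm cm1 c i (a + b)). rewrite Lm_shift. rewrite sum_f_R0_ssum. unfold Lm. lra. Qed.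

Fixpoint tree_ind' (P : tree -> Prop) (H : forall ch, Forall P ch -> P (Node ch)) (t : tree) : P t :=
  match t with
  | Node ch => H ch ((fix go (l : list tree) : Forall P l :=
                       match l with nil => Forall_nil P | t' :: l' => Forall_cons t' (tree_ind' P H t') (go l') end) ch)
  end.

Lemma tsize_Node ch : tsize (Node ch) = S (fsize ch).
Proof. reflexivity. Qed.

Lemma fsize_cons t w : fsize (t :: w) = (tsize t + fsize w)%nat. Proof. reflexivity. Qed.
Lemma fsize_app u v : fsize (u ++ v) = (fsize u + fsize v)%nat.
Proof. induction u; simpl; auto. unfold fsize in *; simpl. rewrite IHu; lia. Qed.

Lemma tcoprod_Node ch : tcoprod (Node ch) =
  (Node ch :: nil, nil) :: map (fun p => (fst p, Node (snd p) :: nil)) (fcoprod ch).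
Proof. reflexivity. Qed.

Lemma fcoprod_cons t w : fcoprod (t :: w) = cross (tcoprod t) (fcoprod w). Proof. reflexivity. Qed.

Lemma in_cross (A B : list (forest * forest)) p : In p (cross A B) ->
  exists a b, In a A /\ In b B /\ p = (fst a ++ fst b, snd a ++ snd b).
Proof. unfold cross. intros H. apply in_flat_map in H. destruct H as [a [Ha H]].
  apply in_map_iff in H. destruct H as [b [E Hb]]. exists a, b; auto. Qed.

Lemma fcoprod_size_F w : Forall (fun t => forall p, In p (tcoprod t) -> (fsize (fst p) + fsize (snd p) = tsize t)%nat) w ->
  forall p, In p (fcoprod w) -> (fsize (fst p) + fsize (snd p) = fsize w)%nat.
Proof. induction w as [|t w IH]; intros HF p.
  simpl. intros [E|[]]; subst; simpl; auto.
  inversion HF; subst. rewrite fcoprod_cons. intros H. apply in_cross in H. destruct H as [a [b [Ha [Hb E]]]]. subst.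
  cbn [fst snd]. rewrite !fsize_app. apply H1 in Ha. apply IH in Hb; auto.
  rewrite fsize_cons. lia. Qed.

Lemma tcoprod_size t : forall p, In p (tcoprod t) -> (fsize (fst p) + fsize (snd p) = tsize t)%nat.
Proof. induction t as [ch IH] using tree_ind'. rewrite tcoprod_Node, tsize_Node. intros p [E|H].
    + subst. cbn [fst snd]. rewrite fsize_cons, tsize_Node. change (fsize nil) with 0%nat. lia.
    + apply in_map_iff in H. destruct H as [[q1 q2] [E Hq]]. subst. cbn [fst snd] in *.
      apply (fcoprod_size_F _ IH) in Hq. rewrite fsize_cons, tsize_Node. change (fsize nil) with 0%nat. cbn [fst snd] in Hq. lia.
Qed.

Lemma fcoprod_size w : forall p, In p (fcoprod w) -> (fsize (fst p) + fsize (snd p) = fsize w)%nat.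
Proof. apply fcoprod_size_F. apply Forall_forall. intros; apply tcoprod_size; auto. Qed.

Lemma tsize_le_fsize t w : In t w -> (tsize t <= fsize w)%nat.
Proof. induction w; intros; simpl in H; [contradiction|]. destruct H; subst; rewrite fsize_cons; [lia|].
  specialize (IHw H); lia. Qed.

Lemma tsize_pos t : (1 <= tsize t)%nat. Proof. destruct t; rewrite tsize_Node; lia. Qed.

Definition prodL (f : tree -> R) (w : forest) : R := fold_right (fun t r => f t * r) 1 w.

Lemma prodL_ext f g w : (forall t, In t w -> f t = g t) -> prodL f w = prodL g w.
Proof. induction w; simpl; intros; auto. rewrite H, IHw; auto. Qed.

Lemma prodL_app f u v : prodL f (u ++ v) = prodL f u * prodL f v.
Proof. induction u; simpl. lra. unfold prodL in *; simpl. rewrite IHu; lra. Qed.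

Definition mult_fun (g : forest -> R) := g nil = 1 /\ forall u v, g (u ++ v) = g u * g v.

Lemma mult_prodL g w : mult_fun g -> g w = prodL (fun t => g (t :: nil)) w.
Proof. intros [H0 H1]. induction w; simpl; auto. change (a :: w) with ((a :: nil) ++ w).
  rewrite H1, IHw; auto. Qed.

Lemma sum_cross (f1 f2 : forest -> R) A B :
  mult_fun f1 -> mult_fun f2 ->
  sumL (fun p => f1 (fst p) * f2 (snd p)) (cross A B) =
  sumL (fun p => f1 (fst p) * f2 (snd p)) A * sumL (fun p => f1 (fst p) * f2 (snd p)) B.
Proof. intros [_ H1] [_ H2]. unfold cross. rewrite sumL_flat_map.
  rewrite <- sumL_scal_r. apply sumL_ext; intros [x1 x2] _.
  rewrite sumL_map. simpl. rewrite <- sumL_scal. apply sumL_ext; intros [y1 y2] _. simpl. rewrite H1, H2. ring. Qed.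

Lemma lc_eval_sumL g A : lc_eval g A = sumL (fun a => fst a * g (snd a)) A. Proof. reflexivity. Qed.

Lemma lc_eval_mul g A B : mult_fun g -> lc_eval g (lc_mul A B) = lc_eval g A * lc_eval g B.
Proof. intros [_ H1]. rewrite !lc_eval_sumL. unfold lc_mul. rewrite sumL_flat_map.
  rewrite <- sumL_scal_r. apply sumL_ext; intros [x1 x2] _.
  rewrite sumL_map. simpl. rewrite <- !sumL_scal. apply sumL_ext; intros [y1 y2] _. simpl. rewrite H1. ring. Qed.

Lemma lc_eval_unit g : mult_fun g -> lc_eval g ((1, nil) :: nil) = 1.
Proof. intros [H0 _]. unfold lc_eval; simpl. rewrite H0; lra. Qed.

Definition fa (n : nat) (w : forest) : lc :=
  fold_right (fun t' acc => lc_mul (tantip n t') acc) ((1, nil) :: nil) w.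

Lemma lc_eval_fa g n w : mult_fun g -> lc_eval g (fa n w) = prodL (fun t => lc_eval g (tantip n t)) w.
Proof. intros Hg. induction w; simpl. apply lc_eval_unit; auto.
  rewrite lc_eval_mul by auto. rewrite IHw; auto. Qed.

Lemma tantip_S n ch : tantip (S n) (Node ch) =
  flat_map (fun p => map (fun q => (- fst q, snd q ++ Node (snd p) :: nil)) (fa n (fst p))) (fcoprod ch).
Proof. reflexivity. Qed.

Lemma lc_eval_tantip_S g n ch : mult_fun g ->
  lc_eval g (tantip (S n) (Node ch)) =
  - sumL (fun p => prodL (fun t => lc_eval g (tantip n t)) (fst p) * g (Node (snd p) :: nil)) (fcoprod ch).
Proof. intros Hg. rewrite tantip_S, lc_eval_sumL, sumL_flat_map, <- sumL_opp.
  apply sumL_ext; intros [p1 p2] _. rewrite sumL_map. cbn [fst snd]. rewrite <- lc_eval_fa by auto.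
  rewrite lc_eval_sumL, <- sumL_scal_r, <- sumL_opp. apply sumL_ext; intros [q1 q2] _.
  cbn [fst snd]. destruct Hg as [_ H1]. rewrite H1. ring. Qed.

Lemma in_fcoprod_tree_size ch p t : In p (fcoprod ch) -> In t (fst p) -> (tsize t <= fsize ch)%nat.
Proof. intros Hp Ht. apply fcoprod_size in Hp. apply tsize_le_fsize in Ht. lia. Qed.

Lemma tantip_fuel g : mult_fun g -> forall n m t, (tsize t <= n)%nat -> (tsize t <= m)%nat ->
  lc_eval g (tantip n t) = lc_eval g (tantip m t).
Proof. intros Hg n. induction n; intros m t Hn Hm. pose proof (tsize_pos t); lia.
  destruct m. pose proof (tsize_pos t); lia. destruct t as [ch]. rewrite tsize_Node in *.
  rewrite !lc_eval_tantip_S by auto. f_equal. apply sumL_ext; intros p Hp. f_equal.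
  apply prodL_ext; intros t Ht. pose proof (in_fcoprod_tree_size _ _ _ Hp Ht).
  apply IHn; lia. Qed.

Definition Sg (g : forest -> R) (t : tree) : R := lc_eval g (S_tree t).

Lemma Sg_Node g ch : mult_fun g ->
  Sg g (Node ch) = - sumL (fun p => prodL (Sg g) (fst p) * g (Node (snd p) :: nil)) (fcoprod ch).
Proof. intros Hg. unfold Sg, S_tree. rewrite tsize_Node, lc_eval_tantip_S by auto.
  f_equal. apply sumL_ext; intros p Hp. f_equal. apply prodL_ext; intros t Ht.
  pose proof (in_fcoprod_tree_size _ _ _ Hp Ht). apply tantip_fuel; auto. Qed.

Lemma S_forest_eval g w : mult_fun g -> lc_eval g (S_forest w) = prodL (Sg g) w.
Proof. intros Hg. induction w; simpl. apply lc_eval_unit; auto.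
  rewrite lc_eval_mul by auto. rewrite IHw; auto. Qed.

Lemma phiL_cons cm1 c t w : phiL cm1 c (t :: w) = pmul (phiL_t cm1 c t) (phiL cm1 c w). Proof. reflexivity. Qed.
Lemma phiL_t_Node cm1 c ch : phiL_t cm1 c (Node ch) = Lpoly cm1 c (phiL cm1 c ch). Proof. reflexivity. Qed.

Lemma peval_phiL_nil cm1 c x : peval (phiL cm1 c nil) x = 1.
Proof. simpl. lra. Qed.

Lemma peval_phiL_prod cm1 c w x : peval (phiL cm1 c w) x = prodL (fun t => peval (phiL_t cm1 c t) x) w.
Proof. induction w. apply peval_phiL_nil. rewrite phiL_cons, peval_pmul, IHw. reflexivity. Qed.

Lemma peval_phiL_app cm1 c u v x : peval (phiL cm1 c (u ++ v)) x = peval (phiL cm1 c u) x * peval (phiL cm1 c v) x.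
Proof. rewrite !peval_phiL_prod, prodL_app. auto. Qed.

Lemma mult_phiL cm1 c x : mult_fun (fun u => peval (phiL cm1 c u) x).
Proof. split. apply peval_phiL_nil. intros; apply peval_phiL_app. Qed.

Lemma peval_phiL_single cm1 c t x : peval (phiL cm1 c (t :: nil)) x = peval (phiL_t cm1 c t) x.
Proof. rewrite peval_phiL_prod. simpl. lra. Qed.

Lemma le_fold_max {A} (f : A -> nat) d l x : In x l -> (f x <= fold_right Nat.max d (map f l))%nat.
Proof. induction l; simpl; intros; [contradiction|]. destruct H; subst; [lia|]. specialize (IHl H); lia. Qed.
Lemma le_fold_max_d {A} (f : A -> nat) d l : (d <= fold_right Nat.max d (map f l))%nat.
Proof. induction l; simpl; lia. Qed.

Definition cop_sum cm1 c (L : list (forest * forest)) a b :=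
  sumL (fun p => peval (phiL cm1 c (fst p)) a * peval (phiL cm1 c (snd p)) b) L.

Lemma coprod_forest_F cm1 c w :
  Forall (fun t => forall a b, peval (phiL_t cm1 c t) (a + b) = cop_sum cm1 c (tcoprod t) a b) w ->
  forall a b, peval (phiL cm1 c w) (a + b) = cop_sum cm1 c (fcoprod w) a b.
Proof. induction w as [|t w IH]; intros HF a b.
  unfold cop_sum; simpl. unfold sumL; simpl. lra.
  inversion HF; subst. rewrite phiL_cons, peval_pmul, fcoprod_cons, H1, IH by auto.
  unfold cop_sum. rewrite (sum_cross (fun u => peval (phiL cm1 c u) a) (fun u => peval (phiL cm1 c u) b));
  auto; apply mult_phiL. Qed.

Lemma coprod_tree cm1 c t : forall a b, peval (phiL_t cm1 c t) (a + b) = cop_sum cm1 c (tcoprod t) a b.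
Proof. induction t as [ch IH] using tree_ind'. intros a b.
  pose proof (coprod_forest_F cm1 c ch IH a) as Hq.
  set (q := phiL cm1 c ch) in *.
  rewrite tcoprod_Node. unfold cop_sum. rewrite sumL_cons, sumL_map. cbn [fst snd].
  rewrite peval_phiL_single, peval_phiL_nil, Rmult_1_r.
  rewrite phiL_t_Node. fold q.
  set (Lc := fcoprod ch) in *.
  set (M := fold_right Nat.max (length q) (map (fun p => length (phiL cm1 c (snd p))) Lc)).
  assert (HqL : forall y, peval q (a + y) = sumL (fun r => fst r * peval (snd r) y)
                   (map (fun p => (peval (phiL cm1 c (fst p)) a, phiL cm1 c (snd p))) Lc)).
  { intros y. rewrite Hq. unfold cop_sum. rewrite sumL_map. auto. }
  pose proof (deriv_transfer q a _ HqL) as Hk.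
  revert b.
  apply (same_deriv (fun b => peval (Lpoly cm1 c q) (a + b))
     (fun b => peval (Lpoly cm1 c q) a + sumL (fun p => peval (phiL cm1 c (fst p)) a *
          peval (phiL cm1 c (Node (snd p) :: nil)) b) Lc)
     (fun b => peval (pder (Lpoly cm1 c q)) (a + b))).
  - intros; apply is_derive_shift.
  - intros x. eapply is_derive_val.
    apply (is_derive_plus (fun _ => peval (Lpoly cm1 c q) a)
      (fun b => sumL (fun p => peval (phiL cm1 c (fst p)) a * peval (phiL cm1 c (Node (snd p) :: nil)) b) Lc)).
    apply is_derive_const.
    apply (is_derive_sumL (fun p b => peval (phiL cm1 c (fst p)) a * peval (phiL cm1 c (Node (snd p) :: nil)) b)
      (fun p => peval (phiL cm1 c (fst p)) a * peval (pder (Lpoly cm1 c (phiL cm1 c (snd p)))) x)).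
    intros p _. apply is_derive_scal.
    apply (is_derive_ext (peval (Lpoly cm1 c (phiL cm1 c (snd p))))).
    intros; rewrite peval_phiL_single; auto. apply is_derive_peval.
    change (plus (zero : R_NormedModule) ?v = ?w) with (0 + v = w). rewrite Rplus_0_l.
    symmetry. rewrite (Lpoly_deriv cm1 c q M) by apply le_fold_max_d.
    rewrite (sumL_ext _ (fun p => peval (phiL cm1 c (fst p)) a * (- cm1 * peval (phiL cm1 c (snd p)) x +
       ssum M (fun m => (-1) ^ m * c m * peval (pdn (S m) (phiL cm1 c (snd p))) x)))).
    2:{ intros p Hp. rewrite (Lpoly_deriv cm1 c _ M); auto. apply (le_fold_max (fun p => length (phiL cm1 c (snd p)))); auto. }
    rewrite (sumL_ext _ (fun p => - cm1 * (peval (phiL cm1 c (fst p)) a * peval (phiL cm1 c (snd p)) x) +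
       ssum M (fun m => (-1) ^ m * c m * (peval (phiL cm1 c (fst p)) a * peval (pdn (S m) (phiL cm1 c (snd p))) x)))).
    2:{ intros. rewrite Rmult_plus_distr_l, <- ssum_scal. f_equal. ring. apply ssum_ext; intros; ring. }
    rewrite sumL_plus, sumL_scal, sumL_ssum. f_equal.
    + f_equal. rewrite Hq. reflexivity.
    + apply ssum_ext; intros. rewrite sumL_scal. f_equal. rewrite Hk, sumL_map. auto.
  - rewrite Rplus_0_r. rewrite (sumL_ext _ (fun _ => 0)). assert (Z: forall l : list (forest*forest), sumL (fun _ => 0) l = 0) by (induction l; [reflexivity| rewrite sumL_cons, IHl; lra]). rewrite Z; lra.
    intros p _. rewrite peval_phiL_single, phiL_t_Node, Lpoly_at0. lra.
Qed.

Lemma coprod_forest cm1 c w a b : peval (phiL cm1 c w) (a + b) = cop_sum cm1 c (fcoprod w) a b.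
Proof. apply coprod_forest_F. apply Forall_forall; intros. apply coprod_tree. Qed.

Lemma counit_phiL cm1 c w : peval (phiL cm1 c w) 0 = match w with nil => 1 | _ => 0 end.
Proof. destruct w. apply peval_phiL_nil. rewrite phiL_cons, peval_pmul. destruct t.
  rewrite phiL_t_Node, Lpoly_at0. lra. Qed.

Lemma antipode_tree cm1 c a : forall n t, (tsize t <= n)%nat ->
  Sg (fun u => peval (phiL cm1 c u) a) t = peval (phiL_t cm1 c t) (- a).
Proof. intros n; induction n; intros t Ht. pose proof (tsize_pos t); lia.
  destruct t as [ch]. rewrite tsize_Node in Ht.
  rewrite Sg_Node by apply mult_phiL.
  pose proof (coprod_tree cm1 c (Node ch) (- a) a) as E.
  rewrite Rplus_opp_l, phiL_t_Node, Lpoly_at0, tcoprod_Node in E. unfold cop_sum in E.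
  rewrite sumL_cons, sumL_map in E. cbn [fst snd] in E. rewrite peval_phiL_single, peval_phiL_nil in E.
  rewrite phiL_t_Node.
  rewrite (sumL_ext _ (fun p => peval (phiL cm1 c (fst p)) (- a) * peval (phiL cm1 c (Node (snd p) :: nil)) a)).
  rewrite phiL_t_Node in E. lra. intros p Hp. f_equal. rewrite peval_phiL_prod. apply prodL_ext; intros t Ht'.
  apply IHn. pose proof (in_fcoprod_tree_size _ _ _ Hp Ht'). lia. Qed.

Lemma hopf_part cm1 c : hopf_morphism (phiL cm1 c).
Proof. split; [|split; [|split; [|split]]].
  - apply peval_phiL_nil.
  - apply peval_phiL_app.
  - intros; apply coprod_forest.
  - apply counit_phiL.
  - intros w a. rewrite S_forest_eval by apply mult_phiL. rewrite peval_phiL_prod.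
    apply prodL_ext; intros. apply (antipode_tree cm1 c a (tsize t)); auto.
Qed.

Definition Dz := fun z : R => z <> 0.

Lemma lim_bound (f : R -> R) l K d : 0 < d -> (forall z, z <> 0 -> Rabs z < d -> Rabs (f z - l) <= K * Rabs z) ->
  limit1_in f Dz l 0.
Proof. intros Hd H eps Heps. set (K' := Rabs K + 1).
  exists (Rmin d (eps / K')). split. apply Rmin_pos; auto. unfold K'; apply Rdiv_lt_0_compat; auto. pose proof (Rabs_pos K); lra.
  intros z [Hz Hzd]. simpl in *. unfold Rdist in *. rewrite Rminus_0_r in Hzd.
  assert (Rabs z < d) by (eapply Rlt_le_trans; [apply Hzd|apply Rmin_l]).
  assert (Rabs z < eps / K') by (eapply Rlt_le_trans; [apply Hzd|apply Rmin_r]).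
  eapply Rle_lt_trans. apply H; auto.
  assert (0 < K') by (unfold K'; pose proof (Rabs_pos K); lra).
  apply Rle_lt_trans with (K' * Rabs z). apply Rmult_le_compat_r. apply Rabs_pos. unfold K'; pose proof (Rle_abs K); lra.
  apply (Rmult_lt_compat_l K') in H1; auto. replace (K' * (eps / K')) with eps in H1 by (field; lra). auto. Qed.

Lemma lim_const c : limit1_in (fun _ => c) Dz c 0.
Proof. apply (lim_bound _ _ 0 1). lra. intros. rewrite Rminus_diag, Rabs_R0. lra. Qed.

Lemma lim_ext (f g : R -> R) l : (forall z, z <> 0 -> f z = g z) -> limit1_in f Dz l 0 -> limit1_in g Dz l 0.
Proof. intros E H eps Heps. destruct (H eps Heps) as [a [Ha Hb]]. exists a; split; auto.
  intros z [Hz1 Hz2]. rewrite <- E; auto. Qed.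

Lemma lim_val (f : R -> R) l l' : l = l' -> limit1_in f Dz l 0 -> limit1_in f Dz l' 0.
Proof. intros; subst; auto. Qed.

Lemma lim_plus f g l l' : limit1_in f Dz l 0 -> limit1_in g Dz l' 0 -> limit1_in (fun z => f z + g z) Dz (l + l') 0.
Proof. apply limit_plus. Qed.
Lemma lim_mul f g l l' : limit1_in f Dz l 0 -> limit1_in g Dz l' 0 -> limit1_in (fun z => f z * g z) Dz (l * l') 0.
Proof. apply limit_mul. Qed.
Lemma lim_scal c f l : limit1_in f Dz l 0 -> limit1_in (fun z => c * f z) Dz (c * l) 0.
Proof. intros. apply lim_mul; auto. apply lim_const. Qed.

Lemma lim_ssum n (f : nat -> R -> R) (l : nat -> R) :
  (forall i, (i < n)%nat -> limit1_in (f i) Dz (l i) 0) ->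
  limit1_in (fun z => ssum n (fun i => f i z)) Dz (ssum n l) 0.
Proof. induction n; intros. simpl. apply lim_const.
  simpl. apply lim_plus. apply IHn; intros; apply H; lia. apply H; lia. Qed.

Lemma lim_sumL {A} (L : list A) (f : A -> R -> R) (l : A -> R) :
  (forall a, In a L -> limit1_in (f a) Dz (l a) 0) ->
  limit1_in (fun z => sumL (fun a => f a z) L) Dz (sumL l L) 0.
Proof. induction L; intros. apply (lim_ext (fun _ => 0)). intros; reflexivity. apply lim_const.
  rewrite sumL_cons. apply (lim_ext (fun z => f a z + sumL (fun a => f a z) L)).
  intros; rewrite sumL_cons; auto. apply lim_plus. apply H; simpl; auto. apply IHL; intros; apply H; simpl; auto. Qed.

Lemma lim_id : limit1_in (fun z => z) Dz 0 0.
Proof. apply (lim_bound _ _ 1 1). lra. intros. rewrite Rminus_0_r. lra. Qed.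

Lemma lim_pow j : limit1_in (fun z => z ^ j) Dz (0 ^ j) 0.
Proof. induction j. apply (lim_ext (fun _ => 1)). intros; reflexivity. apply lim_const.
  simpl. apply lim_mul; auto. apply lim_id. Qed.

Lemma lim_zero_pow (f : R -> R) K d j : 0 < d -> (1 <= j)%nat ->
  (forall z, z <> 0 -> Rabs z < d -> Rabs (f z) <= K * Rabs z ^ j) -> limit1_in f Dz 0 0.
Proof. intros Hd Hj H. apply (lim_bound _ _ (Rabs K) (Rmin d 1)). apply Rmin_pos; lra.
  intros z Hz Hzd. assert (Rabs z < d) by (eapply Rlt_le_trans; [apply Hzd|apply Rmin_l]).
  assert (Rabs z < 1) by (eapply Rlt_le_trans; [apply Hzd|apply Rmin_r]).
  rewrite Rminus_0_r. eapply Rle_trans. apply H; auto.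
  destruct j; [lia|]. simpl. rewrite <- Rmult_assoc.
  assert (0 <= Rabs z ^ j <= 1). { split. apply pow_le, Rabs_pos. rewrite <- (pow1 j). apply pow_incr. split; [apply Rabs_pos|lra]. }
  assert (K <= Rabs K) by apply Rle_abs. pose proof (Rabs_pos z).
  assert (K * Rabs z <= Rabs K * Rabs z) by (apply Rmult_le_compat_r; lra).
  assert (0 <= Rabs K * Rabs z) by (apply Rmult_le_pos; auto; apply Rabs_pos).
  destruct (Rle_dec 0 (K * Rabs z)).
  - apply Rle_trans with (K * Rabs z * 1). apply Rmult_le_compat_l; lra. lra.
  - assert (K * Rabs z * Rabs z ^ j <= 0) by nra. lra. Qed.

Lemma geom_bound x m : 0 <= x <= 1/2 -> ssum m (fun i => x ^ i) <= 2 - 2 * x ^ m.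
Proof. intros Hx. induction m; simpl. lra. assert (0 <= x ^ m) by (apply pow_le; lra).
  assert (x ^ m * (1 - 2 * x) >= 0) by (apply Rle_ge, Rmult_le_pos; lra). nra. Qed.

Lemma tail_partial (a : nat -> R) A x M n : 0 <= x <= 1/2 -> 0 <= A ->
  (forall i, (M <= i)%nat -> Rabs (a i) <= A * x ^ i) ->
  Rabs (ssum (M + n) a - ssum M a) <= 2 * A * x ^ M.
Proof. intros Hx HA H. rewrite ssum_split. replace (ssum M a + ssum n (fun i => a (M + i)%nat) - ssum M a)
   with (ssum n (fun i => a (M + i)%nat)) by ring.
  eapply Rle_trans. apply ssum_abs. eapply Rle_trans. apply ssum_le with (g := fun i => A * x ^ M * x ^ i).
  intros. rewrite Rmult_assoc, <- pow_add. apply H; lia.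
  rewrite ssum_scal. pose proof (geom_bound x n Hx). assert (0 <= x ^ n) by (apply pow_le; lra).
  assert (0 <= A * x ^ M) by (apply Rmult_le_pos; auto; apply pow_le; lra).
  change (ssum n (pow x)) with (ssum n (fun i => x ^ i)). replace (2 * A * x ^ M) with (A * x ^ M * 2) by ring. apply Rmult_le_compat_l; lra. Qed.

Lemma tail_bound (a : nat -> R) Sv A x M : infinite_sum a Sv -> 0 <= x <= 1/2 -> 0 <= A ->
  (forall i, (M <= i)%nat -> Rabs (a i) <= A * x ^ i) ->
  Rabs (Sv - ssum M a) <= 2 * A * x ^ M.
Proof. intros HS Hx HA H. apply Rnot_lt_le. intros Hc.
  set (e := Rabs (Sv - ssum M a) - 2 * A * x ^ M).
  destruct (HS e) as [N HN]. unfold e; lra.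
  specialize (HN (N + M)%nat). assert (N + M >= N)%nat by lia. specialize (HN H0).
  unfold Rdist in HN. rewrite sum_f_R0_ssum in HN. replace (S (N + M)) with (M + S N)%nat in HN by lia.
  pose proof (tail_partial a A x M (S N) Hx HA H).
  assert (Rabs (Sv - ssum M a) <= Rabs (ssum (M + S N) a - Sv) + Rabs (ssum (M + S N) a - ssum M a)).
  { replace (Sv - ssum M a) with (- (ssum (M + S N) a - Sv) + (ssum (M + S N) a - ssum M a)) by ring.
    eapply Rle_trans. apply Rabs_triang. rewrite Rabs_Ropp. lra. }
  unfold e in HN. lra. Qed.

Lemma exp_tail y J : Rabs y <= 1/2 ->
  Rabs (exp y - ssum J (fun j => y ^ j / INR (fact j))) <= 2 * Rabs y ^ J.
Proof. intros Hy. destruct (exist_exp y) as [l Hl] eqn:E.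
  assert (exp y = l) by (unfold exp; rewrite E; auto). subst l.
  rewrite (ssum_ext J _ (fun j => / INR (fact j) * y ^ j)) by (intros; unfold Rdiv; ring).
  replace (2 * Rabs y ^ J) with (2 * 1 * Rabs y ^ J) by ring.
  apply tail_bound; auto. split; [apply Rabs_pos|auto]. lra.
  intros. rewrite Rabs_mult, <- RPow_abs. rewrite Rabs_inv. rewrite Rabs_pos_eq by apply pos_INR.
  rewrite Rmult_1_l. rewrite <- (Rmult_1_l (Rabs y ^ i)) at 2. apply Rmult_le_compat_r. apply pow_le, Rabs_pos.
  assert (1 <= INR (fact i)). { change 1 with (INR 1). apply le_INR. pose proof (lt_O_fact i); lia. }
  rewrite <- Rinv_1. apply Rinv_le_contravar; lra. Qed.

Lemma exp_near0 y : Rabs y <= 1/2 -> Rabs (exp y - 1) <= 2 * Rabs y.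
Proof. intros. pose proof (exp_tail y 1 H). simpl in H0. replace (0 + 1 / 1) with 1 in H0 by field. lra. Qed.

Lemma lim_exp_lin c : limit1_in (fun z => exp (c * z)) Dz 1 0.
Proof. apply (lim_bound _ _ (2 * Rabs c) (/ (2 * (Rabs c + 1)))).
  apply Rinv_0_lt_compat. pose proof (Rabs_pos c); lra.
  intros z Hz Hzd. assert (Rabs (c * z) <= 1/2).
  { rewrite Rabs_mult. pose proof (Rabs_pos c). pose proof (Rabs_pos z).
    assert (Rabs z * (2 * (Rabs c + 1)) < 1).
    { apply (Rmult_lt_compat_r (2 * (Rabs c + 1))) in Hzd; [|lra]. rewrite Rinv_l in Hzd; lra. }
    nra. }
  eapply Rle_trans. apply exp_near0; auto. rewrite Rabs_mult. lra. Qed.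

Lemma ssum_ge_term f n i : (forall j, 0 <= f j) -> (i < n)%nat -> f i <= ssum n f.
Proof. induction n; intros. lia. simpl. destruct (Nat.eq_dec i n). subst.
  assert (0 <= ssum n f) by (rewrite <- (ssum_zero n (fun _ => 0)) by auto; apply ssum_le; auto). lra.
  assert (f i <= ssum n f) by (apply IHn; auto; lia). specialize (H n). lra. Qed.

Lemma series_terms_bounded a Sv : infinite_sum a Sv -> exists A, 0 <= A /\ forall n, Rabs (a n) <= A.
Proof. intros H. destruct (H 1) as [N HN]. lra.
  exists (2 + ssum (S N) (fun i => Rabs (a i))). split.
  assert (0 <= ssum (S N) (fun i => Rabs (a i))) by (rewrite <- (ssum_zero (S N) (fun _ => 0)) by auto; apply ssum_le; intros; apply Rabs_pos). lra.
  intros n. assert (0 <= ssum (S N) (fun i => Rabs (a i))) by (rewrite <- (ssum_zero (S N) (fun _ => 0)) by auto; apply ssum_le; intros; apply Rabs_pos).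
  destruct (le_lt_dec n N).
  - assert (Rabs (a n) <= ssum (S N) (fun i => Rabs (a i))) by (apply (ssum_ge_term (fun i => Rabs (a i))); [intros; apply Rabs_pos|lia]). lra.
  - destruct n. lia. pose proof (HN (S n) ltac:(lia)) as Ha. pose proof (HN n ltac:(lia)) as Hb.
    unfold Rdist in Ha, Hb. rewrite !sum_f_R0_ssum in Ha, Hb.
    change (ssum (S (S n)) a) with (ssum (S n) a + a (S n)) in Ha.
    replace (a (S n)) with ((ssum (S n) a + a (S n) - Sv) - (ssum (S n) a - Sv)) by ring.
    eapply Rle_trans. apply Rabs_triang. rewrite Rabs_Ropp. lra. Qed.

Lemma laurent (F : R -> R) cm1 (cs : nat -> R) r : 0 < r ->
  (forall z, 0 < Rabs z < r -> infinite_sum (fun n => cs n * z ^ n) (F z - cm1 / z)) ->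
  forall M, exists d C, 0 < d /\ 0 <= C /\ forall u, 0 < Rabs u < d ->
    Rabs (F u - cm1 / u - ssum M (fun m => cs m * u ^ m)) <= C * Rabs u ^ M.
Proof. intros Hr H M. set (z0 := r / 2).
  assert (Hz0 : 0 < Rabs z0 < r) by (unfold z0; rewrite Rabs_pos_eq; lra).
  destruct (series_terms_bounded _ _ (H z0 Hz0)) as [A [HA HAb]].
  exists (z0 / 2), (2 * A / z0 ^ M). split. unfold z0; lra. split.
  apply Rmult_le_pos. lra. apply Rlt_le, Rinv_0_lt_compat, pow_lt; unfold z0; lra.
  intros u Hu. assert (Hu' : 0 < Rabs u < r) by (unfold z0 in *; lra).
  assert (Hpz : 0 < z0) by (unfold z0; lra).
  assert (Hx : 0 <= Rabs u / z0 <= 1 / 2).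
  { split. apply Rmult_le_pos. apply Rabs_pos. apply Rlt_le, Rinv_0_lt_compat; auto.
    apply (Rmult_le_reg_r z0); auto. unfold Rdiv; rewrite Rmult_assoc, Rinv_l by lra. lra. }
  assert (Hterm : forall i, (M <= i)%nat -> Rabs (cs i * u ^ i) <= A * (Rabs u / z0) ^ i).
  { intros i _. rewrite Rabs_mult, <- RPow_abs.
    specialize (HAb i). rewrite Rabs_mult, <- RPow_abs, (Rabs_pos_eq z0) in HAb by lra.
    assert (0 < z0 ^ i) by (apply pow_lt; auto).
    assert (Rabs (cs i) <= A / z0 ^ i). { apply (Rmult_le_reg_r (z0 ^ i)); auto. unfold Rdiv; rewrite Rmult_assoc, Rinv_l; lra. }
    assert (0 <= Rabs u ^ i) by (apply pow_le, Rabs_pos).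
    apply Rle_trans with (A / z0 ^ i * Rabs u ^ i). apply Rmult_le_compat_r; auto.
    unfold Rdiv. rewrite Rpow_mult_distr, pow_inv. right; field. apply pow_nonzero; lra. }
  pose proof (tail_bound (fun n => cs n * u ^ n) _ A (Rabs u / z0) M (H u Hu') Hx HA Hterm) as E.
  replace (2 * A / z0 ^ M * Rabs u ^ M) with (2 * A * (Rabs u / z0) ^ M). apply E.
  unfold Rdiv. rewrite Rpow_mult_distr, pow_inv. field. apply pow_nonzero; lra. Qed.

Lemma Fbound (F : R -> R) cm1 (cs : nat -> R) r : 0 < r ->
  (forall z, 0 < Rabs z < r -> infinite_sum (fun n => cs n * z ^ n) (F z - cm1 / z)) ->
  exists d B, 0 < d /\ 0 <= B /\ forall u, 0 < Rabs u < d -> Rabs (F u) <= B / Rabs u.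
Proof. intros Hr H. destruct (laurent F cm1 cs r Hr H 0) as [d [C [Hd [HC Hb]]]].
  exists d, (Rabs cm1 + C * d). split; auto. split. pose proof (Rabs_pos cm1). nra.
  intros u Hu. specialize (Hb u Hu). simpl in Hb. rewrite Rminus_0_r, Rmult_1_r in Hb.
  assert (u <> 0) by (intro; subst; rewrite Rabs_R0 in Hu; lra).
  apply (Rmult_le_reg_r (Rabs u)). lra. unfold Rdiv; rewrite Rmult_assoc, Rinv_l by lra. rewrite Rmult_1_r.
  replace (F u) with ((F u - cm1 / u) + cm1 / u) by ring.
  eapply Rle_trans. apply Rmult_le_compat_r. apply Rabs_pos. apply Rabs_triang.
  rewrite Rmult_plus_distr_r. unfold Rdiv. rewrite Rabs_mult, Rabs_inv, Rmult_assoc, Rinv_l by (apply Rabs_no_R0; auto).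
  assert (Rabs (F u - cm1 * / u) * Rabs u <= C * d). { apply Rmult_le_compat; try apply Rabs_pos; lra. }
  lra. Qed.

Definition Gz (F : R -> R) (z : R) (u : forest) : R := prodL (tprodF F z) u.

Lemma tprodF_Node F z ch : tprodF F z (Node ch) = F (z * INR (tsize (Node ch))) * Gz F z ch.
Proof. reflexivity. Qed.

Lemma mult_Gz F z : mult_fun (Gz F z).
Proof. split. reflexivity. intros; unfold Gz; apply prodL_app. Qed.

Lemma prodL_bound (f K : tree -> R) L w : 0 <= L ->
  (forall t, In t w -> Rabs (f t) <= K t * L ^ tsize t) ->
  Rabs (prodL f w) <= prodL K w * L ^ fsize w.
Proof. intros HL; induction w; intros H. simpl. rewrite Rabs_R1. lra.
  simpl. rewrite Rabs_mult. fold (prodL f w) (prodL K w). change (fsize (a :: w)) with (tsize a + fsize w)%nat.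
  rewrite pow_add. replace (K a * prodL K w * (L ^ tsize a * L ^ fsize w)) with ((K a * L ^ tsize a) * (prodL K w * L ^ fsize w)) by ring.
  apply Rmult_le_compat; try apply Rabs_pos. apply H; simpl; auto. apply IHw; intros; apply H; simpl; auto. Qed.

Lemma prodL_one w : prodL (fun _ => 1) w = 1.
Proof. induction w; simpl; auto. fold (prodL (fun _ => 1) w). rewrite IHw; lra. Qed.

Lemma Gz_bound_tree F z d B : 0 <= B -> z <> 0 -> (forall u, 0 < Rabs u < d -> Rabs (F u) <= B / Rabs u) ->
  forall t, Rabs z * INR (tsize t) < d -> Rabs (tprodF F z t) <= 1 * (B / Rabs z) ^ tsize t.
Proof. intros HB Hz HF t. induction t as [ch IH] using tree_ind'. intros Hs.
  rewrite tprodF_Node, Rabs_mult, Rmult_1_l. rewrite tsize_Node in *. simpl (_ ^ S _).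
  assert (Hzp : 0 < Rabs z) by (apply Rabs_pos_lt; auto).
  assert (HL : 0 <= B / Rabs z) by (apply Rmult_le_pos; auto; apply Rlt_le, Rinv_0_lt_compat; auto).
  apply Rmult_le_compat; try apply Rabs_pos.
  - assert (Hn : 1 <= INR (S (fsize ch))) by (change 1 with (INR 1); apply le_INR; lia).
    eapply Rle_trans. apply HF. rewrite Rabs_mult, (Rabs_pos_eq (INR _)) by apply pos_INR. split; auto.
    apply Rmult_lt_0_compat; lra. unfold Rdiv. apply Rmult_le_compat_l; auto.
    rewrite Rabs_mult, (Rabs_pos_eq (INR _)) by apply pos_INR. apply Rinv_le_contravar; auto. nra.
  - unfold Gz. assert (P := prodL_bound (tprodF F z) (fun _ => 1) (B / Rabs z) ch HL).
    rewrite prodL_one, Rmult_1_l in P. apply P.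
    intros t Ht. rewrite Forall_forall in IH. apply IH; auto.
    apply tsize_le_fsize, le_INR in Ht. rewrite S_INR in Hs. pose proof (Rabs_pos z). nra. Qed.

Lemma Gz_bound F z d B u : 0 <= B -> z <> 0 -> (forall u, 0 < Rabs u < d -> Rabs (F u) <= B / Rabs u) ->
  Rabs z * INR (fsize u) < d -> Rabs (Gz F z u) <= (B / Rabs z) ^ fsize u.
Proof. intros HB Hz HF Hs. unfold Gz.
  assert (HL : 0 <= B / Rabs z) by (apply Rmult_le_pos; auto; apply Rlt_le, Rinv_0_lt_compat, Rabs_pos_lt; auto).
  assert (P := prodL_bound (tprodF F z) (fun _ => 1) (B / Rabs z) u HL).
  rewrite prodL_one, Rmult_1_l in P. apply P.
  intros t Ht. apply (Gz_bound_tree F z d B); auto.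
  apply tsize_le_fsize, le_INR in Ht. pose proof (Rabs_pos z). nra. Qed.

Fixpoint Kf (n : nat) (t : tree) : R :=
  match n with
  | O => 0
  | S n' => match t with Node ch => sumL (fun p => prodL (Kf n') (fst p)) (fcoprod ch) end
  end.

Lemma lc_tantip_bound g L N : 0 <= L -> mult_fun g -> (forall u, (fsize u <= N)%nat -> Rabs (g u) <= L ^ fsize u) ->
  forall n t, (tsize t <= N)%nat -> Rabs (lc_eval g (tantip n t)) <= Kf n t * L ^ tsize t.
Proof. intros HL Hg Hb n. induction n; intros t Ht.
  simpl. unfold lc_eval; simpl. rewrite Rabs_R0. lra.
  destruct t as [ch]. rewrite lc_eval_tantip_S by auto. rewrite Rabs_Ropp. simpl Kf.
  rewrite <- sumL_scal_r. eapply Rle_trans. apply sumL_abs. apply sumL_le. intros [p1 p2] Hp. cbn [fst snd].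
  pose proof (fcoprod_size _ _ Hp) as Hs. cbn [fst snd] in Hs. rewrite tsize_Node in *.
  rewrite Rabs_mult. replace (S (fsize ch)) with (fsize p1 + fsize (Node p2 :: nil))%nat
    by (rewrite fsize_cons, tsize_Node; change (fsize nil) with 0%nat; lia).
  rewrite pow_add, <- Rmult_assoc. apply Rmult_le_compat; try apply Rabs_pos.
  - apply prodL_bound; auto. intros t Ht'. apply IHn.
    pose proof (in_fcoprod_tree_size ch (p1, p2) t Hp Ht'). lia.
  - apply Hb. rewrite fsize_cons, tsize_Node. change (fsize nil) with 0%nat. lia. Qed.

Definition KX (u : forest) : R := prodL (fun t => Kf (tsize t) t) u.

Lemma X_bound g L N u : 0 <= L -> mult_fun g -> (forall u, (fsize u <= N)%nat -> Rabs (g u) <= L ^ fsize u) ->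
  (fsize u <= N)%nat -> Rabs (lc_eval g (S_forest u)) <= KX u * L ^ fsize u.
Proof. intros HL Hg Hb Hu. rewrite S_forest_eval by auto. apply prodL_bound; auto.
  intros t Ht. unfold Sg, S_tree. apply (lc_tantip_bound g L N); auto.
  apply tsize_le_fsize in Ht; lia. Qed.

Definition X (F : R -> R) z u := lc_eval (Gz F z) (S_forest u).

Lemma X_app F z u v : X F z (u ++ v) = X F z u * X F z v.
Proof. unfold X. rewrite !S_forest_eval by apply mult_Gz. apply prodL_app. Qed.

Lemma X_nil F z : X F z nil = 1.
Proof. unfold X. rewrite S_forest_eval by apply mult_Gz. reflexivity. Qed.

Definition AL (F : R -> R) (k : nat) (z t : R) (L : list (forest * forest)) : R :=
  sumL (fun p => X F z (fst p) * Gz F z (snd p) * (- (z * INR (fsize (snd p)))) ^ k *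
                 exp (- (z * INR (fsize (snd p))) * t)) L.

Lemma C_n_n n : Binomial.C n n = 1.
Proof. unfold Binomial.C. rewrite Nat.sub_diag. simpl (fact 0). simpl (INR 1). field. apply INR_fact_neq0. Qed.
Lemma C_n_0 n : Binomial.C n 0 = 1.
Proof. unfold Binomial.C. rewrite Nat.sub_0_r. simpl (fact 0). simpl (INR 1). field. apply INR_fact_neq0. Qed.

Lemma lc_eval_ext g1 g2 A : (forall u, g1 u = g2 u) -> lc_eval g1 A = lc_eval g2 A.
Proof. intros. rewrite !lc_eval_sumL. apply sumL_ext; intros. rewrite H; auto. Qed.

Lemma prodL_exp_weight (h : tree -> R) b w :
  prodL (fun t => exp (b * INR (tsize t)) * h t) w = exp (b * INR (fsize w)) * prodL h w.
Proof. induction w; simpl. rewrite Rmult_0_r, exp_0; lra. fold (prodL (fun t => exp (b * INR (tsize t)) * h t) w) (prodL h w).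
  rewrite IHw. change (fsize (a :: w)) with (tsize a + fsize w)%nat. rewrite plus_INR, Rmult_plus_distr_l, exp_plus. ring. Qed.

Lemma mult_weight g b : mult_fun g -> mult_fun (fun u => exp (b * INR (fsize u)) * g u).
Proof. intros [H0 H1]. split. simpl. rewrite H0, Rmult_0_r, exp_0; ring.
  intros. rewrite H1, fsize_app, plus_INR, Rmult_plus_distr_l, exp_plus. ring. Qed.

Lemma tantip_weight g b : mult_fun g -> forall n t,
  lc_eval (fun u => exp (b * INR (fsize u)) * g u) (tantip n t) = exp (b * INR (tsize t)) * lc_eval g (tantip n t).
Proof. intros Hg n. induction n; intros t. unfold lc_eval; simpl; ring.
  destruct t as [ch]. rewrite !lc_eval_tantip_S by (auto; apply mult_weight; auto).
  rewrite <- Ropp_mult_distr_r, <- sumL_scal. f_equal. apply sumL_ext; intros [p1 p2] Hp.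
  cbn [fst snd]. rewrite (prodL_ext _ (fun t => exp (b * INR (tsize t)) * lc_eval g (tantip n t))) by (intros; apply IHn).
  rewrite prodL_exp_weight. pose proof (fcoprod_size _ _ Hp) as Hs. cbn [fst snd] in Hs.
  rewrite tsize_Node. rewrite fsize_cons, tsize_Node. change (fsize nil) with 0%nat.
  replace (S (fsize ch)) with (fsize p1 + (S (fsize p2) + 0))%nat by lia.
  rewrite !plus_INR, !Rmult_plus_distr_l, !exp_plus. simpl (INR 0). rewrite Rmult_0_r, exp_0. ring. Qed.

Lemma S_forest_weight g b w : mult_fun g ->
  lc_eval (fun u => exp (b * INR (fsize u)) * g u) (S_forest w) = exp (b * INR (fsize w)) * lc_eval g (S_forest w).
Proof. intros Hg. rewrite !S_forest_eval by (auto; apply mult_weight; auto).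
  rewrite <- prodL_exp_weight. apply prodL_ext; intros. unfold Sg, S_tree. apply tantip_weight; auto. Qed.

Lemma phiR_decomp F mu z s w : 0 < mu -> 0 < s ->
  phi_R F mu z s w = exp (- (z * INR (fsize w)) * ln mu) * AL F 0 z (ln (s / mu)) (fcoprod w).
Proof. intros Hmu Hs. unfold phi_R, AL. fold (sumL (fun p => lc_eval (phi_s F z mu) (S_forest (fst p)) * phi_s F z s (snd p)) (fcoprod w)).
  rewrite <- sumL_scal. apply sumL_ext. intros [p1 p2] Hp. cbn [fst snd].
  pose proof (fcoprod_size _ _ Hp) as Hsz. cbn [fst snd] in Hsz.
  rewrite (lc_eval_ext _ (fun u => exp ((- z * ln mu) * INR (fsize u)) * Gz F z u)).
  2:{ intros u. unfold phi_s, Rpower, Gz. f_equal. f_equal. ring. }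
  rewrite S_forest_weight by apply mult_Gz. fold (X F z p1).
  unfold phi_s, Rpower. fold (Gz F z p2). rewrite <- Hsz.
  unfold Rdiv. rewrite ln_mult, ln_Rinv by (auto; apply Rinv_0_lt_compat; auto).
  simpl pow. rewrite plus_INR.
  change (fold_right (fun t r => tprodF F z t * r) 1 p2) with (Gz F z p2).
  replace (exp (- (z * (INR (fsize p1) + INR (fsize p2))) * ln mu)) with
    (exp (- z * ln mu * INR (fsize p1)) * exp (- (z * INR (fsize p2)) * ln mu)) by (rewrite <- exp_plus; f_equal; ring).
  replace (exp (- (z * INR (fsize p2)) * (ln s + - ln mu))) with
    (exp (- (z * INR (fsize p2)) * ln s) * exp (- (z * INR (fsize p2)) * - ln mu)) by (rewrite <- exp_plus; f_equal; ring).
  assert (E : exp (- (z * INR (fsize p2)) * ln mu) * exp (- (z * INR (fsize p2)) * - ln mu) = 1).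
  { rewrite <- exp_plus. replace (- (z * INR (fsize p2)) * ln mu + - (z * INR (fsize p2)) * - ln mu) with 0 by ring. apply exp_0. }
  transitivity (exp (- z * ln mu * INR (fsize p1)) * X F z p1 * (exp (- (z * INR (fsize p2)) * ln s) * Gz F z p2) *
    (exp (- (z * INR (fsize p2)) * ln mu) * exp (- (z * INR (fsize p2)) * - ln mu))). rewrite E; ring. ring. Qed.

Lemma AL_cross F k z t A B :
  AL F k z t (cross A B) = ssum (S k) (fun i => Binomial.C k i * AL F i z t A * AL F (k - i) z t B).
Proof. unfold AL, cross. rewrite sumL_flat_map.
  rewrite (sumL_ext _ (fun a => ssum (S k) (fun i => Binomial.C k i *
      (X F z (fst a) * Gz F z (snd a) * (- (z * INR (fsize (snd a)))) ^ i * exp (- (z * INR (fsize (snd a))) * t)) *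
      sumL (fun p => X F z (fst p) * Gz F z (snd p) * (- (z * INR (fsize (snd p)))) ^ (k - i) *
           exp (- (z * INR (fsize (snd p))) * t)) B))).
  - rewrite sumL_ssum. apply ssum_ext; intros i _.
    set (SB := sumL _ B).
    rewrite (sumL_ext _ (fun a => Binomial.C k i * SB * (X F z (fst a) * Gz F z (snd a) * (- (z * INR (fsize (snd a)))) ^ i *
       exp (- (z * INR (fsize (snd a))) * t)))) by (intros; ring).
    rewrite sumL_scal. ring.
  - intros [a1 a2] _. rewrite sumL_map. cbn [fst snd].
    rewrite (ssum_ext _ _ (fun i => sumL (fun p => Binomial.C k i *
      (X F z a1 * Gz F z a2 * (- (z * INR (fsize a2))) ^ i * exp (- (z * INR (fsize a2)) * t)) *
      (X F z (fst p) * Gz F z (snd p) * (- (z * INR (fsize (snd p)))) ^ (k - i) *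
           exp (- (z * INR (fsize (snd p))) * t))) B)).
    2:{ intros. rewrite <- sumL_scal. auto. }
    rewrite <- sumL_ssum. apply sumL_ext; intros [b1 b2] _. cbn [fst snd].
    rewrite X_app. unfold Gz. rewrite prodL_app. fold (Gz F z a2) (Gz F z b2).
    rewrite fsize_app, plus_INR.
    replace (- (z * (INR (fsize a2) + INR (fsize b2)))) with (- (z * INR (fsize a2)) + - (z * INR (fsize b2))) by ring.
    rewrite binomial, sum_f_R0_ssum. rewrite Rmult_plus_distr_r, exp_plus.
    rewrite <- ssum_scal, <- ssum_scal_r'. apply ssum_ext; intros. ring.
Qed.

Lemma Gz_single_Node F z ch : Gz F z (Node ch :: nil) = F (z * INR (S (fsize ch))) * Gz F z ch.
Proof. change (Gz F z (Node ch :: nil)) with (tprodF F z (Node ch) * 1). rewrite tprodF_Node, tsize_Node. ring. Qed.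

Lemma fsize_single_Node ch : fsize (Node ch :: nil) = S (fsize ch).
Proof. rewrite fsize_cons, tsize_Node. change (fsize nil) with 0%nat. lia. Qed.

Definition uu (z : R) (p : forest * forest) : R := z * INR (S (fsize (snd p))).

Lemma AL_tree_pos F k z t ch : (1 <= k)%nat ->
  AL F k z t (tcoprod (Node ch)) =
  sumL (fun p => X F z (fst p) * Gz F z (snd p) * F (uu z p) * (- uu z p) ^ k * exp (- uu z p * t)) (fcoprod ch).
Proof. intros Hk. unfold AL. rewrite tcoprod_Node, sumL_cons, sumL_map. cbn [fst snd].
  change (fsize nil) with 0%nat. simpl (INR 0). rewrite Rmult_0_r, Ropp_0, pow_i by lia.
  rewrite Rmult_0_r, Rmult_0_l, Rplus_0_l. apply sumL_ext; intros [p1 p2] _. cbn [fst snd].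
  rewrite Gz_single_Node, fsize_single_Node. unfold uu; cbn [snd]. ring. Qed.

Lemma AL_tree_0 F z t ch :
  AL F 0 z t (tcoprod (Node ch)) =
  sumL (fun p => X F z (fst p) * Gz F z (snd p) * F (uu z p) * (exp (- uu z p * t) - 1)) (fcoprod ch).
Proof. unfold AL. rewrite tcoprod_Node, sumL_cons, sumL_map. cbn [fst snd].
  change (fsize nil) with 0%nat. simpl (INR 0). rewrite Rmult_0_r, Ropp_0, Rmult_0_l, exp_0.
  unfold X at 1. rewrite S_forest_eval by apply mult_Gz. simpl prodL. rewrite Sg_Node by apply mult_Gz.
  replace (Gz F z nil) with 1 by reflexivity.
  assert (E1 : sumL (fun p => prodL (Sg (Gz F z)) (fst p) * Gz F z (Node (snd p) :: nil)) (fcoprod ch) =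
     sumL (fun p => X F z (fst p) * Gz F z (snd p) * F (uu z p)) (fcoprod ch)).
  { apply sumL_ext. intros [p1 p2] _. cbn [fst snd]. unfold X. rewrite S_forest_eval by apply mult_Gz.
    rewrite Gz_single_Node. unfold uu; cbn [snd]. ring. }
  assert (E2 : sumL (fun p => X F z (fst p) * Gz F z (Node (snd p) :: nil) * (- (z * INR (fsize (Node (snd p) :: nil)))) ^ 0 *
     exp (- (z * INR (fsize (Node (snd p) :: nil))) * t)) (fcoprod ch) =
     sumL (fun p => X F z (fst p) * Gz F z (snd p) * F (uu z p) * exp (- uu z p * t)) (fcoprod ch)).
  { apply sumL_ext. intros [p1 p2] _. cbn [fst snd]. rewrite Gz_single_Node, fsize_single_Node. unfold uu; cbn [snd]. ring. }
  assert (E3 : sumL (fun p => X F z (fst p) * Gz F z (snd p) * F (uu z p) * (exp (- uu z p * t) - 1)) (fcoprod ch) =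
     sumL (fun p => X F z (fst p) * Gz F z (snd p) * F (uu z p) * exp (- uu z p * t)) (fcoprod ch) -
     sumL (fun p => X F z (fst p) * Gz F z (snd p) * F (uu z p)) (fcoprod ch)).
  { unfold Rminus. rewrite <- sumL_opp, <- sumL_plus. apply sumL_ext; intros; ring. }
  rewrite E3. rewrite <- E1, <- E2. simpl pow. ring. Qed.

Lemma Ushift F z t ch j :
  sumL (fun p => X F z (fst p) * Gz F z (snd p) * (- uu z p) ^ j * exp (- (z * INR (fsize (snd p))) * t)) (fcoprod ch)
  = ssum (S j) (fun i => Binomial.C j i * (- z) ^ (j - i) * AL F i z t (fcoprod ch)).
Proof. unfold AL. rewrite (ssum_ext _ _ (fun i => sumL (fun p => Binomial.C j i * (- z) ^ (j - i) *
     (X F z (fst p) * Gz F z (snd p) * (- (z * INR (fsize (snd p)))) ^ i * exp (- (z * INR (fsize (snd p))) * t))) (fcoprod ch))).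
  2:{ intros; rewrite sumL_scal; auto. }
  rewrite <- sumL_ssum. apply sumL_ext; intros p _.
  unfold uu. rewrite S_INR. replace (- (z * (INR (fsize (snd p)) + 1))) with (- (z * INR (fsize (snd p))) + - z) by ring.
  rewrite binomial, sum_f_R0_ssum. rewrite <- ssum_scal, <- ssum_scal_r'. apply ssum_ext; intros. ring. Qed.

Definition Rm (F : R -> R) cm1 (cs : nat -> R) M u := F u - cm1 / u - ssum M (fun m => cs m * u ^ m).

Lemma neg_pow_sq m : (-1) ^ m * (-1) ^ m = 1.
Proof. rewrite <- pow_add. replace (m + m)%nat with (2 * m)%nat by lia. rewrite pow_1_even. auto. Qed.

Lemma pexp_id Fu cm1 (cs : nat -> R) M u k : u <> 0 ->
  Fu * (- u) ^ S k = - cm1 * (- u) ^ k + ssum M (fun m => cs m * (-1) ^ m * (- u) ^ (m + S k))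
     + (Fu - cm1 / u - ssum M (fun m => cs m * u ^ m)) * (- u) ^ S k.
Proof. intros Hu.
  rewrite !Rmult_minus_distr_r. rewrite <- ssum_scal_r'.
  assert (E : ssum M (fun m => cs m * (-1) ^ m * (- u) ^ (m + S k)) = ssum M (fun i => cs i * u ^ i * (- u) ^ S k)).
  { apply ssum_ext; intros. rewrite pow_add. replace (- u) with ((-1) * u) at 1 by ring.
    rewrite Rpow_mult_distr. transitivity (cs i * ((-1) ^ i * (-1) ^ i) * u ^ i * (- u) ^ S k). ring.
    rewrite neg_pow_sq. ring. }
  rewrite E. simpl pow. field. auto. Qed.

Lemma AL_tree_expand F cm1 cs M k z t ch : z <> 0 ->
  AL F (S k) z t (tcoprod (Node ch)) =
  exp (- z * t) * (- cm1 * ssum (S k) (fun i => Binomial.C k i * (- z) ^ (k - i) * AL F i z t (fcoprod ch))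
     + ssum M (fun m => cs m * (-1) ^ m * ssum (S (m + S k)) (fun i => Binomial.C (m + S k) i * (- z) ^ (m + S k - i) * AL F i z t (fcoprod ch))))
  + sumL (fun p => X F z (fst p) * Gz F z (snd p) * Rm F cm1 cs M (uu z p) * (- uu z p) ^ S k * exp (- uu z p * t)) (fcoprod ch).
Proof. intros Hz. rewrite AL_tree_pos by lia.
  rewrite <- Ushift.
  rewrite (ssum_ext M _ (fun m => cs m * (-1) ^ m * sumL (fun p => X F z (fst p) * Gz F z (snd p) * (- uu z p) ^ (m + S k) *
     exp (- (z * INR (fsize (snd p))) * t)) (fcoprod ch))).
  2:{ intros. rewrite <- Ushift. auto. }
  rewrite (ssum_ext M _ (fun m => sumL (fun p => cs m * (-1) ^ m * (X F z (fst p) * Gz F z (snd p) * (- uu z p) ^ (m + S k) *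
     exp (- (z * INR (fsize (snd p))) * t))) (fcoprod ch))).
  2:{ intros. rewrite sumL_scal. auto. }
  rewrite <- sumL_ssum, <- sumL_scal, <- sumL_plus, <- sumL_scal, <- sumL_plus.
  apply sumL_ext. intros p _.
  assert (Hu : uu z p <> 0). { unfold uu. apply Rmult_integral_contrapositive; split; auto. apply not_0_INR; lia. }
  replace (exp (- uu z p * t)) with (exp (- z * t) * exp (- (z * INR (fsize (snd p))) * t)).
  2:{ rewrite <- exp_plus. f_equal. unfold uu. rewrite S_INR. ring. }
  transitivity (X F z (fst p) * Gz F z (snd p) * exp (- z * t) * exp (- (z * INR (fsize (snd p))) * t) * (F (uu z p) * (- uu z p) ^ S k)).
  ring. rewrite (pexp_id (F (uu z p)) cm1 cs M (uu z p) k Hu). unfold Rm.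
  rewrite (ssum_ext M (fun m => cs m * (-1) ^ m * (X F z (fst p) * Gz F z (snd p) * (- uu z p) ^ (m + S k) *
     exp (- (z * INR (fsize (snd p))) * t))) (fun m => (X F z (fst p) * Gz F z (snd p) * exp (- (z * INR (fsize (snd p))) * t)) *
     (cs m * (-1) ^ m * (- uu z p) ^ (m + S k)))) by (intros; ring).
  rewrite ssum_scal. ring. Qed.

Lemma AL_tree_taylor F z t ch J :
  AL F 0 z t (tcoprod (Node ch)) =
  ssum J (fun j => t ^ S j / INR (fact (S j)) * AL F (S j) z 0 (tcoprod (Node ch)))
  + sumL (fun p => X F z (fst p) * Gz F z (snd p) * F (uu z p) *
       (exp (- uu z p * t) - ssum (S J) (fun j => (- uu z p * t) ^ j / INR (fact j)))) (fcoprod ch).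
Proof. rewrite AL_tree_0.
  rewrite (ssum_ext J _ (fun j => sumL (fun p => t ^ S j / INR (fact (S j)) *
     (X F z (fst p) * Gz F z (snd p) * F (uu z p) * (- uu z p) ^ S j * exp (- uu z p * 0))) (fcoprod ch))).
  2:{ intros. rewrite AL_tree_pos by lia. rewrite sumL_scal. auto. }
  rewrite <- sumL_ssum, <- sumL_plus. apply sumL_ext; intros p _.
  set (a := X F z (fst p) * Gz F z (snd p) * F (uu z p)).
  rewrite (ssum_ext J _ (fun j => a * ((- uu z p * t) ^ S j / INR (fact (S j))))).
  2:{ intros. rewrite Rmult_0_r, exp_0. rewrite Rpow_mult_distr. unfold a. field. apply INR_fact_neq0. }
  rewrite ssum_scal. rewrite ssum_shift. simpl (INR (fact 0)). rewrite pow_O. field. Qed.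

Lemma pascal_sum (a b : nat -> R) k :
  ssum (S k) (fun i => Binomial.C k i * (a (S i) * b (k - i)%nat + a i * b (S (k - i)))) =
  ssum (S (S k)) (fun i => Binomial.C (S k) i * a i * b (S k - i)%nat).
Proof.
  rewrite (ssum_ext (S k) _ (fun i => Binomial.C k i * a (S i) * b (k - i)%nat + Binomial.C k i * a i * b (S k - i)%nat)).
  2:{ intros. replace (S (k - i)) with (S k - i)%nat by lia. ring. }
  rewrite ssum_plus.
  change (ssum (S k) (fun i => Binomial.C k i * a (S i) * b (k - i)%nat)) with
    (ssum k (fun i => Binomial.C k i * a (S i) * b (k - i)%nat) + Binomial.C k k * a (S k) * b (k - k)%nat).
  rewrite (ssum_shift k (fun i => Binomial.C k i * a i * b (S k - i)%nat)).
  rewrite (ssum_shift (S k) (fun i => Binomial.C (S k) i * a i * b (S k - i)%nat)).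
  change (ssum (S k) (fun i => Binomial.C (S k) (S i) * a (S i) * b (S k - S i)%nat)) with
    (ssum k (fun i => Binomial.C (S k) (S i) * a (S i) * b (S k - S i)%nat) + Binomial.C (S k) (S k) * a (S k) * b (S k - S k)%nat).
  rewrite (ssum_ext k (fun i => Binomial.C (S k) (S i) * a (S i) * b (S k - S i)%nat)
    (fun i => Binomial.C k i * a (S i) * b (k - i)%nat + Binomial.C k (S i) * a (S i) * b (S k - S i)%nat)).
  2:{ intros. rewrite <- pascal by auto. simpl (S k - S i)%nat. ring. }
  rewrite ssum_plus. rewrite !C_n_n, !C_n_0, !Nat.sub_diag. ring. Qed.

Lemma leibniz p q k x : peval (pdn k (pmul p q)) x =
  ssum (S k) (fun i => Binomial.C k i * peval (pdn i p) x * peval (pdn (k - i) q) x).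
Proof. revert x. induction k; intros x.
  simpl. rewrite peval_pmul, C_n_0. ring.
  assert (H1 := is_derive_peval (pdn k (pmul p q)) x).
  assert (H2 : is_derive (fun y => ssum (S k) (fun i => Binomial.C k i * peval (pdn i p) y * peval (pdn (k - i) q) y)) x
     (ssum (S k) (fun i => Binomial.C k i * (peval (pdn (S i) p) x * peval (pdn (k - i) q) x + peval (pdn i p) x * peval (pdn (S (k - i)) q) x)))).
  { apply is_derive_ssum. intros i _.
    apply (is_derive_ext (fun y => Binomial.C k i * (peval (pdn i p) y * peval (pdn (k - i) q) y))). intros t0; symmetry; apply Rmult_assoc.
    eapply is_derive_val.
    apply (is_derive_scal (fun y => peval (pdn i p) y * peval (pdn (k - i) q) y)).
    apply (is_derive_mult (peval (pdn i p)) (peval (pdn (k - i) q))). apply is_derive_peval. apply is_derive_peval.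
    try (intros; apply Rmult_comm).
    unfold plus, mult; simpl. rewrite <- !pdn_S. replace (S (k - i)) with (S (k - i)) by reflexivity. ring. }
  apply is_derive_unique in H1. apply is_derive_unique in H2.
  rewrite (Derive_ext _ _ x IHk) in H1. rewrite pdn_S, <- H1.
  transitivity (ssum (S k) (fun i => Binomial.C k i * (peval (pdn (S i) p) x * peval (pdn (k - i) q) x + peval (pdn i p) x * peval (pdn (S (k - i)) q) x))).
  rewrite <- H2. apply Derive_ext; intros; reflexivity.
  apply (pascal_sum (fun i => peval (pdn i p) x) (fun i => peval (pdn i q) x)). Qed.

Definition GoodL (F : R -> R) (L : list (forest * forest)) (P : poly) :=
  forall k t, limit1_in (fun z => AL F k z t L) Dz (peval (pdn k P) t) 0.

Lemma Good_nil F cm1 cs : GoodL F (fcoprod nil) (phiL cm1 cs nil).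
Proof. intros k t. simpl fcoprod. simpl phiL. rewrite peval_pdn. simpl length.
  simpl ssum. unfold D. destruct k.
  - apply (lim_ext (fun _ => 1)). intros. unfold AL. rewrite sumL_cons, sumL_nil. cbn [fst snd].
    rewrite X_nil. change (fsize nil) with 0%nat. simpl. rewrite Rmult_0_r, Ropp_0, Rmult_0_l, exp_0. unfold Gz; simpl; ring.
    simpl. apply lim_val with 1. simpl. field. apply lim_const.
  - apply (lim_ext (fun _ => 0)). intros. unfold AL. rewrite sumL_cons, sumL_nil. cbn [fst snd].
    change (fsize nil) with 0%nat. simpl (INR 0). rewrite Rmult_0_r, Ropp_0, pow_i by lia. ring.
    simpl. apply lim_val with 0. ring. apply lim_const. Qed.

Lemma Good_cons F t0 w P1 P2 : GoodL F (tcoprod t0) P1 -> GoodL F (fcoprod w) P2 ->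
  GoodL F (fcoprod (t0 :: w)) (pmul P1 P2).
Proof. intros H1 H2 k t. rewrite fcoprod_cons.
  apply (lim_ext (fun z => ssum (S k) (fun i => Binomial.C k i * AL F i z t (tcoprod t0) * AL F (k - i) z t (fcoprod w)))).
  intros; rewrite AL_cross; auto.
  rewrite leibniz. apply lim_ssum. intros i _. apply lim_mul. apply lim_scal. apply H1. apply H2. Qed.

Lemma lim_negpow n : limit1_in (fun z => (- z) ^ n) Dz ((- 0) ^ n) 0.
Proof. apply (lim_ext (fun z => (-1) ^ n * z ^ n)). intros. rewrite <- Rpow_mult_distr. f_equal; ring.
  apply lim_val with ((-1) ^ n * 0 ^ n). rewrite <- Rpow_mult_distr. f_equal; ring.
  apply lim_scal. apply lim_pow. Qed.

Lemma lim_binom F L q : GoodL F L q -> forall j t,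
  limit1_in (fun z => ssum (S j) (fun i => Binomial.C j i * (- z) ^ (j - i) * AL F i z t L)) Dz (peval (pdn j q) t) 0.
Proof. intros HG j t.
  apply lim_val with (ssum (S j) (fun i => Binomial.C j i * (- 0) ^ (j - i) * peval (pdn i q) t)).
  - change (ssum (S j) (fun i => Binomial.C j i * (- 0) ^ (j - i) * peval (pdn i q) t)) with
      (ssum j (fun i => Binomial.C j i * (- 0) ^ (j - i) * peval (pdn i q) t) + Binomial.C j j * (- 0) ^ (j - j) * peval (pdn j q) t).
    rewrite ssum_zero. rewrite C_n_n, Nat.sub_diag. simpl. ring.
    intros. rewrite Ropp_0, pow_i by lia. ring.
  - apply lim_ssum. intros i _. apply lim_mul. apply lim_scal. apply lim_negpow. apply HG. Qed.

Lemma Lpoly_dk cm1 c q M k x : (length q <= M)%nat ->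
  peval (pdn (S k) (Lpoly cm1 c q)) x =
  - cm1 * peval (pdn k q) x + ssum M (fun m => c m * (-1) ^ m * peval (pdn (m + S k) q) x).
Proof. intros HM. unfold pdn. rewrite Nat.iter_succ_r. fold (pdn k (pder (Lpoly cm1 c q))).
  assert (E : forall y, peval (pder (Lpoly cm1 c q)) y =
     lcp ((- cm1, q) :: map (fun m => ((-1) ^ m * c m, pdn (S m) q)) (seq 0 M)) y).
  { intros y. rewrite (Lpoly_deriv cm1 c q M y HM). unfold lcp. rewrite sumL_cons, sumL_map, sumL_seq. auto. }
  rewrite (pdn_lin _ _ E). unfold lcp. rewrite map_cons, sumL_cons, map_map, sumL_map, sumL_seq. cbn [fst snd].
  f_equal. apply ssum_ext; intros. unfold pdn. rewrite <- Nat.iter_add. replace (k + S i)%nat with (i + S k)%nat by lia. ring. Qed.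

Lemma RemBound F d B ch (W : forest * forest -> R) cW j z : 0 <= B ->
  (forall u, 0 < Rabs u < d -> Rabs (F u) <= B / Rabs u) -> z <> 0 -> Rabs z * INR (fsize ch) < d ->
  (forall p, In p (fcoprod ch) -> Rabs (W p) <= cW * Rabs z ^ (fsize ch + j)) ->
  Rabs (sumL (fun p => X F z (fst p) * Gz F z (snd p) * W p) (fcoprod ch)) <=
  sumL (fun p => KX (fst p)) (fcoprod ch) * B ^ fsize ch * cW * Rabs z ^ j.
Proof. intros HB HF Hz Hd HW.
  assert (Hzp : 0 < Rabs z) by (apply Rabs_pos_lt; auto).
  set (L := B / Rabs z).
  assert (HL : 0 <= L) by (unfold L; apply Rmult_le_pos; auto; apply Rlt_le, Rinv_0_lt_compat; auto).
  assert (HG : forall u, (fsize u <= fsize ch)%nat -> Rabs (Gz F z u) <= L ^ fsize u).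
  { intros u Hu. apply (Gz_bound F z d B u HB Hz HF). apply le_INR in Hu. nra. }
  eapply Rle_trans. apply sumL_abs.
  rewrite <- !sumL_scal_r. apply sumL_le. intros [p1 p2] Hp. cbn [fst snd].
  pose proof (fcoprod_size _ _ Hp) as Hs. cbn [fst snd] in Hs.
  rewrite !Rabs_mult.
  assert (H1 : Rabs (X F z p1) <= KX p1 * L ^ fsize p1).
  { apply (X_bound (Gz F z) L (fsize ch)); auto. apply mult_Gz. lia. }
  assert (H2 : Rabs (Gz F z p2) <= L ^ fsize p2) by (apply HG; lia).
  assert (H3 := HW _ Hp). cbn [fst snd] in H3.
  apply Rle_trans with (KX p1 * L ^ fsize p1 * L ^ fsize p2 * (cW * Rabs z ^ (fsize ch + j))).
  apply Rmult_le_compat; try apply Rabs_pos. apply Rmult_le_pos; apply Rabs_pos.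
  apply Rmult_le_compat; try apply Rabs_pos; auto. auto.
  right. rewrite (Rmult_assoc (KX p1)), <- pow_add, Hs. rewrite pow_add. unfold L. unfold Rdiv. rewrite Rpow_mult_distr, pow_inv.
  field. apply pow_nonzero. lra. Qed.

Lemma exp_le_mono a b : a <= b -> exp a <= exp b.
Proof. intros [H|H]. left; apply exp_increasing; auto. subst; lra. Qed.

Lemma uu_bound z p N : (fsize (snd p) <= N)%nat -> Rabs (uu z p) <= Rabs z * (INR N + 1).
Proof. intros H. unfold uu. rewrite Rabs_mult, (Rabs_pos_eq (INR _)) by apply pos_INR.
  apply Rmult_le_compat_l. apply Rabs_pos. rewrite S_INR. apply le_INR in H. lra. Qed.

Lemma uu_pos z p : z <> 0 -> 0 < Rabs (uu z p).
Proof. intros. apply Rabs_pos_lt. unfold uu. apply Rmult_integral_contrapositive; split; auto. apply not_0_INR; lia. Qed.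

Lemma small_z z m N : 0 < m -> Rabs z < m / (INR N + 1) -> Rabs z * (INR N + 1) < m.
Proof. intros Hm H. pose proof (pos_INR N). apply (Rmult_lt_compat_r (INR N + 1)) in H; [|lra].
  unfold Rdiv in H. rewrite Rmult_assoc, Rinv_l in H by lra. lra. Qed.

Lemma pow_le_abs a b n : Rabs a <= b -> Rabs a ^ n <= b ^ n.
Proof. intros. apply pow_incr. split; auto. apply Rabs_pos. Qed.

Definition laurent_hyp (F : R -> R) cm1 (cs : nat -> R) r :=
  forall z, 0 < Rabs z < r -> infinite_sum (fun n => cs n * z ^ n) (F z - cm1 / z).

Lemma Good_tree_pos F cm1 cs r ch : 0 < r -> laurent_hyp F cm1 cs r ->
  GoodL F (fcoprod ch) (phiL cm1 cs ch) ->
  forall k t, limit1_in (fun z => AL F (S k) z t (tcoprod (Node ch))) Dz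
      (peval (pdn (S k) (Lpoly cm1 cs (phiL cm1 cs ch))) t) 0.
Proof. intros Hr HLa HG k t.
  set (q := phiL cm1 cs ch) in *. set (N := fsize ch).
  destruct (Fbound F cm1 cs r Hr HLa) as [dF [B [HdF [HB HFb]]]].
  set (M := Nat.max (length q) N).
  destruct (laurent F cm1 cs r Hr HLa M) as [dM [CM [HdM [HCM HRm]]]].
  rewrite (Lpoly_dk cm1 cs q M k t) by (unfold M; lia).
  apply (lim_ext (fun z => exp (- z * t) * (- cm1 * ssum (S k) (fun i => Binomial.C k i * (- z) ^ (k - i) * AL F i z t (fcoprod ch))
     + ssum M (fun m => cs m * (-1) ^ m * ssum (S (m + S k)) (fun i => Binomial.C (m + S k) i * (- z) ^ (m + S k - i) * AL F i z t (fcoprod ch))))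
  + sumL (fun p => X F z (fst p) * Gz F z (snd p) * Rm F cm1 cs M (uu z p) * (- uu z p) ^ S k * exp (- uu z p * t)) (fcoprod ch))).
  { intros z Hz. rewrite (AL_tree_expand F cm1 cs M k z t ch Hz). reflexivity. }
  apply lim_val with (1 * (- cm1 * peval (pdn k q) t + ssum M (fun m => cs m * (-1) ^ m * peval (pdn (m + S k) q) t)) + 0).
  ring.
  apply lim_plus. apply lim_mul.
  - apply (lim_ext (fun z => exp ((- t) * z))). intros; f_equal; ring. apply lim_exp_lin.
  - apply lim_plus. apply lim_scal. apply lim_binom; auto. apply lim_ssum; intros m _. apply lim_scal. apply lim_binom; auto.
  - set (cW := CM * (INR N + 1) ^ (M + S k) * exp (Rabs t)).
    set (m0 := Rmin (Rmin dM dF) 1).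
    assert (Hm0 : 0 < m0) by (unfold m0; repeat apply Rmin_pos; lra).
    assert (HN1 : 0 < INR N + 1) by (pose proof (pos_INR N); lra).
    apply (lim_zero_pow _ (sumL (fun p => KX (fst p)) (fcoprod ch) * B ^ N * cW) (m0 / (INR N + 1)) (M + S k - N)).
    apply Rdiv_lt_0_compat; auto. unfold M; lia.
    intros z Hz Hzd. pose proof (small_z z m0 N Hm0 Hzd) as Hzs.
    assert (Hz1 : Rabs z * (INR N + 1) < dM) by (eapply Rlt_le_trans; [apply Hzs|]; unfold m0; eapply Rle_trans; [apply Rmin_l|apply Rmin_l]).
    assert (Hz2 : Rabs z * (INR N + 1) < dF) by (eapply Rlt_le_trans; [apply Hzs|]; unfold m0; eapply Rle_trans; [apply Rmin_l|apply Rmin_r]).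
    assert (Hz3 : Rabs z * (INR N + 1) < 1) by (eapply Rlt_le_trans; [apply Hzs|]; unfold m0; apply Rmin_r).
    rewrite (sumL_ext _ (fun p => X F z (fst p) * Gz F z (snd p) * (Rm F cm1 cs M (uu z p) * (- uu z p) ^ S k * exp (- uu z p * t))))
      by (intros; ring).
    apply (RemBound F dF B ch (fun p => Rm F cm1 cs M (uu z p) * (- uu z p) ^ S k * exp (- uu z p * t)) cW (M + S k - N) z HB HFb Hz).
    change (fsize ch) with N. pose proof (pos_INR N); pose proof (Rabs_pos z); nra.
    intros p Hp. pose proof (fcoprod_size _ _ Hp) as Hs.
    assert (Hf2 : (fsize (snd p) <= N)%nat) by (unfold N; lia).
    pose proof (uu_bound z p N Hf2) as Hu. pose proof (uu_pos z p Hz) as Hu0.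
    replace (fsize ch + (M + S k - N))%nat with (M + S k)%nat by (unfold M, N; lia).
    rewrite !Rabs_mult. rewrite <- RPow_abs, Rabs_Ropp.
    assert (HR : Rabs (Rm F cm1 cs M (uu z p)) <= CM * Rabs (uu z p) ^ M).
    { apply HRm. lra. }
    assert (HE : Rabs (exp (- uu z p * t)) <= exp (Rabs t)).
    { rewrite Rabs_pos_eq by (apply Rlt_le, exp_pos). apply exp_le_mono.
      apply Rle_trans with (Rabs (- uu z p * t)). apply Rle_abs. rewrite Rabs_mult, Rabs_Ropp.
      pose proof (Rabs_pos t). pose proof (Rabs_pos z). assert (Rabs (uu z p) <= 1) by nra. nra. }
    unfold cW. rewrite pow_add.
    apply Rle_trans with (CM * Rabs (uu z p) ^ M * Rabs (uu z p) ^ S k * exp (Rabs t)).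
    apply Rmult_le_compat. apply Rmult_le_pos; apply Rabs_pos || (apply pow_le, Rabs_pos). apply Rabs_pos.
    apply Rmult_le_compat; try apply Rabs_pos. apply pow_le, Rabs_pos. auto. lra. auto.
    assert (HuM : Rabs (uu z p) ^ M <= (Rabs z * (INR N + 1)) ^ M) by (apply pow_le_abs; auto).
    assert (Huk : Rabs (uu z p) ^ S k <= (Rabs z * (INR N + 1)) ^ S k) by (apply pow_le_abs; auto).
    rewrite !Rpow_mult_distr in *.
    assert (0 <= Rabs (uu z p) ^ M) by (apply pow_le, Rabs_pos).
    assert (0 <= Rabs (uu z p) ^ S k) by (apply pow_le, Rabs_pos).
    assert (0 < exp (Rabs t)) by apply exp_pos.
    apply Rle_trans with (CM * (Rabs z ^ M * (INR N + 1) ^ M) * (Rabs z ^ S k * (INR N + 1) ^ S k) * exp (Rabs t)).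
    apply Rmult_le_compat_r. lra. apply Rmult_le_compat. apply Rmult_le_pos; lra. auto.
    apply Rmult_le_compat_l; auto. auto. right. rewrite pow_add. ring. Qed.

Lemma Good_tree F cm1 cs r ch : 0 < r -> laurent_hyp F cm1 cs r ->
  GoodL F (fcoprod ch) (phiL cm1 cs ch) -> GoodL F (tcoprod (Node ch)) (phiL_t cm1 cs (Node ch)).
Proof. intros Hr HLa HG k t. rewrite phiL_t_Node. destruct k.
  2:{ apply (Good_tree_pos F cm1 cs r ch Hr HLa HG). }
  set (q := phiL cm1 cs ch) in *. set (N := fsize ch).
  destruct (Fbound F cm1 cs r Hr HLa) as [dF [B [HdF [HB HFb]]]].
  set (J := Nat.max (length (Lpoly cm1 cs q)) (S N)).
  apply (lim_ext (fun z => ssum J (fun j => t ^ S j / INR (fact (S j)) * AL F (S j) z 0 (tcoprod (Node ch)))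
    + sumL (fun p => X F z (fst p) * Gz F z (snd p) * F (uu z p) *
       (exp (- uu z p * t) - ssum (S J) (fun j => (- uu z p * t) ^ j / INR (fact j)))) (fcoprod ch))).
  { intros z Hz. rewrite (AL_tree_taylor F z t ch J). reflexivity. }
  apply lim_val with (ssum J (fun j => t ^ S j / INR (fact (S j)) * peval (pdn (S j) (Lpoly cm1 cs q)) 0) + 0).
  { simpl (pdn 0 _). rewrite (taylor_poly _ t J) by (unfold J; lia). rewrite ssum_shift.
    simpl (pdn 0 _). rewrite Lpoly_at0. ring. }
  apply lim_plus.
  - apply lim_ssum. intros j _. apply lim_scal. apply (Good_tree_pos F cm1 cs r ch Hr HLa HG).
  - set (cW := 2 * B * Rabs t ^ S J * (INR N + 1) ^ J).
    set (m0 := Rmin dF (/ (2 * (Rabs t + 1)))).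
    assert (Ht : 0 < 2 * (Rabs t + 1)) by (pose proof (Rabs_pos t); lra).
    assert (Hm0 : 0 < m0) by (unfold m0; apply Rmin_pos; auto; apply Rinv_0_lt_compat; auto).
    assert (HN1 : 0 < INR N + 1) by (pose proof (pos_INR N); lra).
    apply (lim_zero_pow _ (sumL (fun p => KX (fst p)) (fcoprod ch) * B ^ N * cW) (m0 / (INR N + 1)) (J - N)).
    apply Rdiv_lt_0_compat; auto. unfold J; lia.
    intros z Hz Hzd. pose proof (small_z z m0 N Hm0 Hzd) as Hzs.
    assert (Hz2 : Rabs z * (INR N + 1) < dF) by (eapply Rlt_le_trans; [apply Hzs|]; unfold m0; apply Rmin_l).
    assert (Hz3 : Rabs z * (INR N + 1) * (2 * (Rabs t + 1)) < 1).
    { assert (Rabs z * (INR N + 1) < / (2 * (Rabs t + 1))) by (eapply Rlt_le_trans; [apply Hzs|]; unfold m0; apply Rmin_r).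
      apply (Rmult_lt_compat_r (2 * (Rabs t + 1))) in H; auto. rewrite Rinv_l in H; lra. }
    rewrite (sumL_ext _ (fun p => X F z (fst p) * Gz F z (snd p) * (F (uu z p) *
       (exp (- uu z p * t) - ssum (S J) (fun j => (- uu z p * t) ^ j / INR (fact j))))))
      by (intros; ring).
    apply (RemBound F dF B ch _ cW (J - N) z HB HFb Hz).
    change (fsize ch) with N. pose proof (pos_INR N); pose proof (Rabs_pos z); nra.
    intros p Hp. pose proof (fcoprod_size _ _ Hp) as Hs.
    assert (Hf2 : (fsize (snd p) <= N)%nat) by (unfold N; lia).
    pose proof (uu_bound z p N Hf2) as Hu. pose proof (uu_pos z p Hz) as Hu0.
    replace (fsize ch + (J - N))%nat with J by (unfold J, N; lia).
    pose proof (Rabs_pos t).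
    assert (Hy : Rabs (- uu z p * t) <= 1/2).
    { rewrite Rabs_mult, Rabs_Ropp. assert (Rabs (uu z p) * (2 * (Rabs t + 1)) < 1) by nra. nra. }
    pose proof (exp_tail (- uu z p * t) (S J) Hy) as HE.
    rewrite Rabs_mult.
    assert (HF : Rabs (F (uu z p)) <= B / Rabs (uu z p)) by (apply HFb; lra).
    apply Rle_trans with (B / Rabs (uu z p) * (2 * Rabs (- uu z p * t) ^ S J)).
    apply Rmult_le_compat; try apply Rabs_pos; auto.
    rewrite Rabs_mult, Rabs_Ropp, Rpow_mult_distr. simpl pow.
    assert (HuJ : Rabs (uu z p) ^ J <= (Rabs z * (INR N + 1)) ^ J) by (apply pow_le_abs; auto).
    rewrite Rpow_mult_distr in HuJ. unfold cW. simpl pow.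
    assert (0 <= Rabs t ^ J) by (apply pow_le; auto).
    apply Rle_trans with (2 * B * (Rabs t * Rabs t ^ J) * Rabs (uu z p) ^ J).
    right. field. lra.
    rewrite (Rmult_comm (Rabs z ^ J) ((INR N + 1) ^ J)) in HuJ.
    assert (0 <= 2 * B * (Rabs t * Rabs t ^ J)) by (apply Rmult_le_pos; [lra|apply Rmult_le_pos; auto]).
    apply Rle_trans with (2 * B * (Rabs t * Rabs t ^ J) * ((INR N + 1) ^ J * Rabs z ^ J)).
    apply Rmult_le_compat_l; auto. right; ring. Qed.

Lemma Good_all F cm1 cs r : 0 < r -> laurent_hyp F cm1 cs r ->
  forall t, GoodL F (tcoprod t) (phiL_t cm1 cs t).
Proof. intros Hr HLa t. induction t as [ch IH] using tree_ind'.
  apply Good_tree with r; auto.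
  induction ch as [|t0 w IHw]. apply Good_nil.
  inversion IH; subst. apply Good_cons; auto. Qed.

Lemma Good_forest F cm1 cs r w : 0 < r -> laurent_hyp F cm1 cs r ->
  GoodL F (fcoprod w) (phiL cm1 cs w).
Proof. intros Hr HLa. induction w. apply Good_nil. apply Good_cons; auto. apply Good_all with r; auto. Qed.

Theorem mainTheorem7
  (f : R -> R) (c eps : R) (F : R -> R) (cm1 : R) (cs : nat -> R) (r mu : R) :
  cont_on_nonneg f ->
  0 < eps ->
  asymp_c_over f c eps ->
  (forall z, 0 < z < 1 -> mellin_at f z (F z)) ->
  0 < r ->
  (forall z, 0 < Rabs z < r ->
     infinite_sum (fun n => cs n * z ^ n) (F z - cm1 / z)) ->
  0 < mu ->
  is_1cocycle cm1 cs /\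
  (forall (w : forest) (s : R), 0 < s ->
     limit1_in (fun z => phi_R F mu z s w) (fun z => z <> 0)
       (peval (phiL cm1 cs w) (ln (s / mu))) 0) /\
  hopf_morphism (phiL cm1 cs).
Proof.
  intros _ _ _ _ Hr HLa Hmu. split; [apply cocycle_part|split; [|apply hopf_part]].
  intros w s Hs. change (fun z : R => z <> 0) with Dz.
  apply (lim_ext (fun z => exp (- (z * INR (fsize w)) * ln mu) * AL F 0 z (ln (s / mu)) (fcoprod w))).
  { intros z _. rewrite phiR_decomp; auto. }
  apply lim_val with (1 * peval (pdn 0 (phiL cm1 cs w)) (ln (s / mu))). simpl; ring.
  apply lim_mul.
  - apply (lim_ext (fun z => exp ((- (INR (fsize w) * ln mu)) * z))). intros; f_equal; ring. apply lim_exp_lin.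
  - apply (Good_forest F cm1 cs r w Hr HLa).
Qed.
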